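(* Let $Z=(z_1,\dots,z_N)$, $z_k:\mathbb T\to\mathbb R^2$, satisfy $|||Z|||<\infty$ (so the $z_k$ are pairwise disjoint simple closed curves). Let $\Omega_k$ be the interior of the curve $z_k$ and $y_k$ any constant speed parametrization of $\partial\Omega_k$, and $Y=(y_1,\dots,y_N)$. There is a universal constant $C\ge1$ such that $|||Y|||\le C|||Z|||^8$.
   Context: $\mathbb T=[-\pi,\pi]$, endpoints identified. Constant speed parametrization of $\partial\Omega$: counter-clockwise $y:\mathbb T\to\mathbb R^2$ with $|y'|\equiv|\partial\Omega|/2\pi$. For $Z=\{z_k\}$: $\|Z\|_{H^3}^2:=\sum_k(\|z_k\|_{L^\infty}^2+\|z_k'''\|_{L^2}^2)$; $\delta[Z]:=\min\{\min_{i\ne k}\min_{\xi,\eta}|z_i(\xi)-z_k(\eta)|,1\}$ ($:=1$ if $N=1$); $F[Z]:=\max\{\max_k\sup_{\xi,\eta\in\mathbb T,\eta\ne0}\frac{|\eta|}{|z_k(\xi)-z_k(\xi-\eta)|},1\}$; $|||Z|||:=\|Z\|_{H^3}+\delta[Z]^{-1}+F[Z]$. *)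

(* Defs.v *)
From Stdlib Require Import Reals Lra List.
Open Scope R_scope.

(** Points of R^2 and curves T -> R^2 (represented as 2pi-periodic maps R -> R^2). *)
Definition pt := (R * R)%type.
Definition curve := R -> pt.

Definition vsub (p q : pt) : pt := (fst p - fst q, snd p - snd q).
Definition vadd (p q : pt) : pt := (fst p + fst q, snd p + snd q).
Definition vscale (a : R) (p : pt) : pt := (a * fst p, a * snd p).
Definition vnorm2 (p : pt) : R := fst p * fst p + snd p * snd p.
Definition vnorm (p : pt) : R := sqrt (vnorm2 p).
Definition vdist (p q : pt) : R := vnorm (vsub p q).
Definition Jrot (p : pt) : pt := (- snd p, fst p).

Definition inT (x : R) : Prop := - PI <= x <= PI.
Definition periodic (z : curve) : Prop := forall t, z (t + 2 * PI) = z t.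

Definition Dc (z w : curve) : Prop :=
  (forall t, derivable_pt_lim (fun s => fst (z s)) t (fst (w t))) /\
  (forall t, derivable_pt_lim (fun s => snd (z s)) t (snd (w t))).

Definition is_glb (E : R -> Prop) (m : R) : Prop :=
  (forall x, E x -> m <= x) /\ (forall b, (forall x, E x -> b <= x) -> b <= m).

Definition Linf (z : curve) (a : R) : Prop :=
  is_lub (fun r => exists t, inT t /\ r = vnorm (z t)) a.

Fixpoint rsum (g : curve) (a : R) (l : list R) : R :=
  match l with
  | nil => 0
  | b :: l' => vnorm2 (vsub (g b) (g a)) / (b - a) + rsum g b l'
  end.
Fixpoint incr_from (a : R) (l : list R) : Prop :=
  match l with
  | nil => True
  | b :: l' => a < b /\ incr_from b l'
  end.
(** partitions -pi = t_0 < t_1 < ... < t_n = pi (t_0 omitted from the list) *)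
Definition partition (l : list R) : Prop :=
  l <> nil /\ incr_from (- PI) l /\ last l 0 = PI.

(** ||z'''||_{L^2(T)} = b, via F. Riesz' characterisation:
    ||f'||_{L^2}^2 = sup over partitions of the Riesz sums of f (f = z''),
    finite iff f is absolutely continuous with f' in L^2. *)
Definition L2third (z : curve) (b : R) : Prop :=
  exists z1 z2, Dc z z1 /\ Dc z1 z2 /\
    exists S, is_lub (fun r => exists l, partition l /\ r = rsum z2 (- PI) l) S /\
              b = sqrt S.

Fixpoint sumN (n : nat) (f : nat -> R) : R :=
  match n with O => 0 | S m => sumN m f + f m end.

Definition H3norm (N : nat) (Z : nat -> curve) (h : R) : Prop :=
  (forall k, (k < N)%nat -> periodic (Z k)) /\
  exists a b : nat -> R,
    (forall k, (k < N)%nat -> Linf (Z k) (a k) /\ L2third (Z k) (b k)) /\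
    h = sqrt (sumN N (fun k => a k * a k + b k * b k)).

Definition deltaVal (N : nat) (Z : nat -> curve) (d : R) : Prop :=
  ((N <= 1)%nat /\ d = 1) \/
  ((2 <= N)%nat /\ exists m,
     is_glb (fun r => exists i k xi eta, (i < N)%nat /\ (k < N)%nat /\ i <> k /\
                        inT xi /\ inT eta /\ r = vdist (Z i xi) (Z k eta)) m /\
     d = Rmin m 1).

(** F[Z] = f (finite; in particular all the quotients are defined) *)
Definition FVal (N : nat) (Z : nat -> curve) (f : R) : Prop :=
  (forall k xi eta, (k < N)%nat -> inT xi -> inT eta -> eta <> 0 ->
      Z k xi <> Z k (xi - eta)) /\
  is_lub (fun r => r = 1 \/
            exists k xi eta, (k < N)%nat /\ inT xi /\ inT eta /\ eta <> 0 /\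
              r = Rabs eta / vdist (Z k xi) (Z k (xi - eta))) f.

Definition triple_norm (N : nat) (Z : nat -> curve) (w : R) : Prop :=
  exists h d f, H3norm N Z h /\ deltaVal N Z d /\ 0 < d /\ FVal N Z f /\
    w = h + / d + f.

(** Interior of a closed curve: points off the curve whose path component
    in the complement of the curve is bounded. *)
Definition on_curve (z : curve) (p : pt) : Prop := exists t, z t = p.
Definition joinable_avoiding (z : curve) (p q : pt) : Prop :=
  exists g : R -> pt,
    continuity (fun s => fst (g s)) /\ continuity (fun s => snd (g s)) /\
    g 0 = p /\ g 1 = q /\ (forall s, 0 <= s <= 1 -> ~ on_curve z (g s)).
Definition curve_interior (z : curve) (p : pt) : Prop :=
  ~ on_curve z p /\ exists M, forall q, joinable_avoiding z p q -> vnorm q <= M.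

Definition boundary (S : pt -> Prop) (p : pt) : Prop :=
  forall eps, 0 < eps ->
    (exists q, S q /\ vdist p q < eps) /\ (exists q, ~ S q /\ vdist p q < eps).

Definition const_speed_param (Om : pt -> Prop) (y : curve) : Prop :=
  periodic y /\
  (forall s t, - PI <= s < PI -> - PI <= t < PI -> y s = y t -> s = t) /\
  (forall p, boundary Om p <-> on_curve y p) /\
  exists y1, Dc y y1 /\
    (exists c, forall t, vnorm (y1 t) = c) /\
    (* counter-clockwise: the left normal points into Om *)
    (forall t, exists e0, 0 < e0 /\
       forall e, 0 < e < e0 -> Om (vadd (y t) (vscale e (Jrot (y1 t))))).

(* Main.v *)
Require Import Defs.
From Stdlib Require Import Reals Lra Lia Psatz ZArith List ClassicalEpsilon.
Open Scope R_scope.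

Lemma vnorm2_nonneg p : 0 <= vnorm2 p.
Proof. unfold vnorm2; nra. Qed.

Lemma vnorm_nonneg p : 0 <= vnorm p.
Proof. unfold vnorm; apply sqrt_pos. Qed.

Lemma vnorm_sq p : vnorm p * vnorm p = vnorm2 p.
Proof. unfold vnorm; apply sqrt_sqrt, vnorm2_nonneg. Qed.

Lemma vnorm_fst p : Rabs (fst p) <= vnorm p.
Proof.
  unfold vnorm, vnorm2. rewrite <- sqrt_Rsqr_abs. apply sqrt_le_1_alt.
  unfold Rsqr; nra.
Qed.

Lemma vnorm_snd p : Rabs (snd p) <= vnorm p.
Proof.
  unfold vnorm, vnorm2. rewrite <- sqrt_Rsqr_abs. apply sqrt_le_1_alt.
  unfold Rsqr; nra.
Qed.

Lemma sqrt_le_of_sq a b : 0 <= b -> a <= b * b -> sqrt a <= b.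
Proof.
  intros Hb H. rewrite <- (sqrt_square b) by lra. apply sqrt_le_1_alt. lra.
Qed.

Lemma le_sqrt_of_sq a b : 0 <= a -> a * a <= b -> a <= sqrt b.
Proof.
  intros Ha H. rewrite <- (sqrt_square a) by lra. apply sqrt_le_1_alt. lra.
Qed.

Lemma vnorm_le_sum p : vnorm p <= Rabs (fst p) + Rabs (snd p).
Proof.
  unfold vnorm, vnorm2. apply sqrt_le_of_sq.
  - pose proof (Rabs_pos (fst p)); pose proof (Rabs_pos (snd p)); lra.
  - pose proof (Rabs_pos (fst p)); pose proof (Rabs_pos (snd p)).
    assert (Rabs (fst p) * Rabs (fst p) = fst p * fst p) as E1.
    { rewrite <- Rabs_mult. apply Rabs_right; nra. }
    assert (Rabs (snd p) * Rabs (snd p) = snd p * snd p) as E2.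
    { rewrite <- Rabs_mult. apply Rabs_right; nra. }
    nra.
Qed.

Lemma vnorm_le_of_comp p a : 0 <= a -> Rabs (fst p) <= a -> Rabs (snd p) <= a ->
  vnorm p <= 2 * a.
Proof. intros. pose proof (vnorm_le_sum p). lra. Qed.

Lemma vnorm2_le_of_vnorm p a : vnorm p <= a -> vnorm2 p <= a * a.
Proof. intros H. rewrite <- vnorm_sq. pose proof (vnorm_nonneg p). nra. Qed.

Lemma vnorm_le_of_vnorm2 p a : 0 <= a -> vnorm2 p <= a * a -> vnorm p <= a.
Proof. intros. unfold vnorm. apply sqrt_le_of_sq; auto. Qed.

Lemma vnorm_ge_of_vnorm2 p a : 0 <= a -> a * a <= vnorm2 p -> a <= vnorm p.
Proof. intros. unfold vnorm. apply le_sqrt_of_sq; auto. Qed.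

Lemma vnorm_triangle p q : vnorm (vadd p q) <= vnorm p + vnorm q.
Proof.
  apply vnorm_le_of_vnorm2.
  { pose proof (vnorm_nonneg p); pose proof (vnorm_nonneg q); lra. }
  pose proof (vnorm_sq p) as Hp; pose proof (vnorm_sq q) as Hq.
  pose proof (vnorm_nonneg p); pose proof (vnorm_nonneg q).
  destruct p as [a b]; destruct q as [c d]; unfold vadd, vnorm2 in *; simpl in *.
  assert (a*c + b*d <= vnorm (a,b) * vnorm (c,d)).
  { destruct (Rle_dec (a*c+b*d) 0). nra.
    apply Rsqr_incr_0_var. unfold Rsqr.
    replace (vnorm (a,b) * vnorm (c,d) * (vnorm (a,b) * vnorm (c,d))) with
      ((vnorm (a,b) * vnorm (a,b)) * (vnorm (c,d) * vnorm (c,d))) by ring.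
    rewrite Hp, Hq. pose proof (Rle_0_sqr (a*d-b*c)); unfold Rsqr in *; nra. nra. }
  nra.
Qed.

Lemma vsub_vadd p q : vsub p q = vadd p (vscale (-1) q).
Proof. destruct p, q; unfold vsub, vadd, vscale; simpl; f_equal; ring. Qed.



Lemma vnorm2_vsub_sym p q : vnorm2 (vsub p q) = vnorm2 (vsub q p).
Proof. destruct p, q; unfold vnorm2, vsub; simpl; ring. Qed.

Lemma vnorm_vsub_sym p q : vnorm (vsub p q) = vnorm (vsub q p).
Proof. unfold vnorm. rewrite vnorm2_vsub_sym. auto. Qed.

Lemma Rdiv_le_0_compat a b : 0 <= a -> 0 < b -> 0 <= a / b.
Proof. intros. unfold Rdiv. apply Rmult_le_pos; auto. left; apply Rinv_0_lt_compat; auto. Qed.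

Lemma vnorm_scale a p : vnorm (vscale a p) = Rabs a * vnorm p.
Proof.
  unfold vnorm, vnorm2, vscale; simpl.
  replace (a * fst p * (a * fst p) + a * snd p * (a * snd p)) with
    ((a*a) * (fst p * fst p + snd p * snd p)) by ring.
  rewrite sqrt_mult_alt by nra. f_equal.
  rewrite <- sqrt_Rsqr_abs. reflexivity.
Qed.

Lemma vnorm_opp p : vnorm (vscale (-1) p) = vnorm p.
Proof. rewrite vnorm_scale. replace (Rabs (-1)) with 1. ring. rewrite Rabs_left; lra. Qed.

Lemma vdist_triangle p q r : vdist p r <= vdist p q + vdist q r.
Proof.
  unfold vdist.
  replace (vsub p r) with (vadd (vsub p q) (vsub q r)).
  apply vnorm_triangle.
  destruct p, q, r; unfold vsub, vadd; simpl; f_equal; ring.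
Qed.

Lemma vdist_sym p q : vdist p q = vdist q p.
Proof. unfold vdist. apply vnorm_vsub_sym. Qed.

Lemma vdist_nonneg p q : 0 <= vdist p q.
Proof. apply vnorm_nonneg. Qed.

Lemma vdist_eq0 p q : vdist p q = 0 -> p = q.
Proof.
  unfold vdist, vnorm. intros H. apply sqrt_eq_0 in H; [|apply vnorm2_nonneg].
  destruct p as [a b], q as [c d]; unfold vnorm2, vsub in H; simpl in H.
  pose proof (Rle_0_sqr (a-c)); pose proof (Rle_0_sqr (b-d)); unfold Rsqr in *.
  assert (E1 : (a-c)*(a-c) = 0) by lra. assert (E2 : (b-d)*(b-d) = 0) by lra.
  apply Rmult_integral in E1; apply Rmult_integral in E2.
  f_equal; lra.
Qed.

Lemma vdist_self p : vdist p p = 0.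
Proof.
  unfold vdist, vnorm, vnorm2, vsub. simpl.
  replace (_ + _) with 0 by ring. apply sqrt_0.
Qed.

Lemma vdist_pos p q : p <> q -> 0 < vdist p q.
Proof.
  intros H. destruct (vdist_nonneg p q) as [|E]; auto.
  exfalso; apply H, vdist_eq0; auto.
Qed.

Lemma periodic_nat (z : curve) : periodic z -> forall n t, z (t + 2 * PI * INR n) = z t.
Proof.
  intros Hp n; induction n as [|n IH]; intros t.
  - simpl. f_equal; ring.
  - rewrite S_INR. replace (t + 2 * PI * (INR n + 1)) with ((t + 2*PI*INR n) + 2*PI) by ring.
    rewrite Hp. apply IH.
Qed.

Lemma periodic_Z (z : curve) : periodic z -> forall (k : Z) t, z (t + 2 * PI * IZR k) = z t.
Proof.
  intros Hp k t.
  assert (E : forall p, IZR (Z.pos p) = INR (Pos.to_nat p)).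
  { intros p. rewrite INR_IZR_INZ, positive_nat_Z. reflexivity. }
  destruct k as [|p|p].
  - simpl. f_equal; ring.
  - rewrite (E p). apply periodic_nat; auto.
  - rewrite <- (periodic_nat z Hp (Pos.to_nat p) (t + 2 * PI * IZR (Z.neg p))).
    f_equal. rewrite <- (E p). rewrite <- Pos2Z.opp_pos, opp_IZR. ring.
Qed.

Lemma reduce_T t : exists k : Z, - PI <= t + 2 * PI * IZR k < PI.
Proof.
  pose proof PI_RGT_0.
  destruct (archimed ((t + PI) / (2 * PI))) as [H1 H2].
  exists (- (up ((t + PI) / (2 * PI)) - 1))%Z.
  rewrite opp_IZR, minus_IZR.
  set (u := IZR (up ((t + PI) / (2 * PI)))) in *.
  assert (E : (t + PI) = 2 * PI * ((t + PI) / (2 * PI))) by (field; lra).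
  split; nra.
Qed.

Lemma round_Z x : exists k : Z, Rabs (x - IZR k) <= / 2.
Proof.
  destruct (archimed (x + /2)) as [H1 H2].
  exists (up (x + /2) - 1)%Z. rewrite minus_IZR.
  apply Rabs_le. lra.
Qed.

Lemma deriv_shift f x l a : derivable_pt_lim f (x + a) l ->
  derivable_pt_lim (fun s => f (s + a)) x l.
Proof.
  intros H eps Heps. destruct (H eps Heps) as [d Hd]. exists d.
  intros h Hh1 Hh2. replace (x + h + a) with (x + a + h) by ring. apply Hd; auto.
Qed.

Lemma deriv_ext f g x l : (forall s, f s = g s) -> derivable_pt_lim f x l -> derivable_pt_lim g x l.
Proof.
  intros E H eps Heps. destruct (H eps Heps) as [d Hd]. exists d.
  intros h Hh1 Hh2. rewrite <- !E. apply Hd; auto.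
Qed.

Lemma Dc_periodic z z1 : periodic z -> Dc z z1 -> periodic z1.
Proof.
  intros Hp [Hx Hy] t.
  destruct (z1 (t + 2 * PI)) as [a b] eqn:E1.
  destruct (z1 t) as [c d] eqn:E2.
  assert (a = c).
  { pose proof (Hx (t + 2*PI)) as H1. rewrite E1 in H1. simpl in H1.
    apply deriv_shift in H1.
    apply (deriv_ext _ (fun s => fst (z s))) in H1.
    2: { intros s. rewrite Hp. reflexivity. }
    pose proof (Hx t) as H2. rewrite E2 in H2. simpl in H2.
    eapply uniqueness_limite; eauto. }
  assert (b = d).
  { pose proof (Hy (t + 2*PI)) as H1. rewrite E1 in H1. simpl in H1.
    apply deriv_shift in H1.
    apply (deriv_ext _ (fun s => snd (z s))) in H1.
    2: { intros s. rewrite Hp. reflexivity. }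
    pose proof (Hy t) as H2. rewrite E2 in H2. simpl in H2.
    eapply uniqueness_limite; eauto. }
  subst; reflexivity.
Qed.

Lemma Rabs_le_inv a b : Rabs a <= b -> - b <= a <= b.
Proof. intros H. pose proof (Rle_abs a). pose proof (Rle_abs (-a)). rewrite Rabs_Ropp in H1. lra. Qed.

Definition good (z z1 z2 : curve) (S f : R) : Prop :=
  periodic z /\ Dc z z1 /\ Dc z1 z2 /\ 0 <= S /\
  (forall l, Defs.partition l -> rsum z2 (-PI) l <= S) /\ 1 <= f /\
  (forall xi eta, inT xi -> inT eta -> eta <> 0 ->
     z xi <> z (xi - eta) /\ Rabs eta / vdist (z xi) (z (xi - eta)) <= f).

Lemma last_cons_gen (x : R) l d : last (x :: l) d = last l x.
Proof.
  revert x d; induction l as [|y l IH]; intros x d; [reflexivity|].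
  change (last (y :: l) d = last (y :: l) x). rewrite !IH. reflexivity.
Qed.

Lemma rsum_app g a l b :
  rsum g a (l ++ b :: nil) = rsum g a l + vnorm2 (vsub (g b) (g (last l a))) / (b - last l a).
Proof.
  revert a; induction l as [|x l IH]; intros a.
  - simpl. ring.
  - rewrite last_cons_gen. change ((x :: l) ++ b :: nil) with (x :: (l ++ b :: nil)).
    simpl rsum at 1. rewrite IH. simpl rsum. ring.
Qed.

Lemma last_cons_cons (x y : R) l d : last (x :: y :: l) d = last (y :: l) d.
Proof. reflexivity. Qed.

Lemma last_app1 (l : list R) b d : last (l ++ b :: nil) d = b.
Proof. induction l as [|x l IH]; simpl; auto. destruct l; simpl in *; auto. Qed.

Lemma incr_from_app a l b : incr_from a l -> last l a < b -> incr_from a (l ++ b :: nil).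
Proof.
  revert a; induction l as [|x l IH]; intros a H Hl.
  - simpl in *. split; auto.
  - rewrite last_cons_gen in Hl. destruct H as [H1 H2]. simpl. split; auto.
Qed.

Lemma incr_from_last a l : incr_from a l -> a <= last l a.
Proof.
  revert a; induction l as [|x l IH]; intros a H.
  - simpl; lra.
  - rewrite last_cons_gen. destruct H as [H1 H2]. specialize (IH x H2). lra.
Qed.

Lemma rsum_nonneg g a l : incr_from a l -> 0 <= rsum g a l.
Proof.
  revert a; induction l as [|x l IH]; intros a H; simpl in *.
  - lra.
  - destruct H as [H1 H2]. specialize (IH x H2).
    assert (0 <= vnorm2 (vsub (g x) (g a)) / (x - a)).
    { apply Rdiv_le_0_compat. apply vnorm2_nonneg. lra. }
    lra.
Qed.

Lemma last_default (l : list R) d1 d2 : l <> nil -> last l d1 = last l d2.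
Proof.
  induction l as [|x l IH]; intros H; [congruence|].
  destruct l; simpl; auto. apply IH. discriminate.
Qed.

Lemma riesz_sub z z1 z2 S f a l : good z z1 z2 S f ->
  - PI <= a -> incr_from a l -> last l a <= PI -> rsum z2 a l <= S.
Proof.
  intros G Ha Hl Hlast.
  destruct G as (_ & _ & _ & HS0 & HS & _).
  set (l1 := if Rlt_dec (-PI) a then a :: l else l).
  assert (E1 : rsum z2 (-PI) l1 >= rsum z2 a l /\ incr_from (-PI) l1 /\ last l1 (-PI) = last l a).
  { unfold l1. destruct (Rlt_dec (-PI) a).
    - split; [|split].
      + simpl. assert (0 <= vnorm2 (vsub (z2 a) (z2 (-PI))) / (a - - PI)).
        { apply Rdiv_le_0_compat. apply vnorm2_nonneg. lra. }
        lra.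
      + simpl. split; auto.
      + rewrite last_cons_gen. reflexivity.
    - assert (a = -PI) by lra. subst a. split; [lra|split; auto]. }
  destruct E1 as (E1a & E1b & E1c).
  destruct (Rlt_dec (last l1 (-PI)) PI) as [Hlt|Hge].
  - set (l2 := l1 ++ PI :: nil).
    assert (Defs.partition l2).
    { split; [|split].
      - unfold l2; destruct l1; discriminate.
      - apply incr_from_app; auto.
      - unfold l2. apply last_app1. }
    specialize (HS l2 H). unfold l2 in HS. rewrite rsum_app in HS.
    assert (0 <= vnorm2 (vsub (z2 PI) (z2 (last l1 (- PI)))) / (PI - last l1 (- PI))).
    { apply Rdiv_le_0_compat. apply vnorm2_nonneg. lra. }
    lra.
  - assert (El : last l1 (-PI) = PI) by lra.
    destruct l1 as [|x l1'] eqn:EL.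
    + simpl in El. pose proof PI_RGT_0. lra.
    + assert (Defs.partition (x :: l1')).
      { split; [discriminate|split; auto].
        rewrite (last_default _ 0 (-PI)); auto. discriminate. }
      specialize (HS _ H). lra.
Qed.

Lemma holder z z1 z2 S f s t : good z z1 z2 S f -> - PI <= s -> s < t -> t <= PI ->
  vnorm2 (vsub (z2 t) (z2 s)) <= S * (t - s).
Proof.
  intros G Hs Hst Ht.
  pose proof (riesz_sub z z1 z2 S f s (t :: nil) G Hs) as H.
  simpl in H. assert (rsum z2 s (t::nil) <= S) by (apply H; auto; tauto).
  simpl in H0. rewrite Rplus_0_r in H0.
  apply (Rmult_le_compat_r (t - s)) in H0; [|lra].
  unfold Rdiv in H0. rewrite Rmult_assoc, Rinv_l in H0 by lra. lra.
Qed.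

Lemma good_per1 z z1 z2 S f : good z z1 z2 S f -> periodic z1.
Proof. intros (Hp & H1 & _). eapply Dc_periodic; eauto. Qed.

Lemma good_per2 z z1 z2 S f : good z z1 z2 S f -> periodic z2.
Proof. intros G. pose proof (good_per1 _ _ _ _ _ G). destruct G as (_ & _ & H2 & _).
  eapply Dc_periodic; eauto. Qed.

Lemma periodic_reduce (z : curve) : periodic z -> forall t, exists t', -PI <= t' < PI /\ z t = z t'.
Proof.
  intros Hp t. destruct (reduce_T t) as [k Hk]. exists (t + 2 * PI * IZR k). split; auto.
  rewrite periodic_Z; auto.
Qed.

Lemma periodic_deriv_zero (g g' : R -> R) :
  (forall t, g (t + 2 * PI) = g t) -> (forall t, derivable_pt_lim g t (g' t)) ->
  exists c, -PI < c < PI /\ g' c = 0.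
Proof.
  intros Hp Hd. pose proof PI_RGT_0.
  destruct (MVT_cor2 g g' (-PI) PI) as [c [Hc1 Hc2]]; [lra| intros; apply Hd |].
  exists c. split; auto.
  replace PI with (-PI + 2*PI) in Hc1 at 1 by ring. rewrite Hp in Hc1.
  assert (g' c * (PI - - PI) = 0) by lra.
  apply Rmult_integral in H0. destruct H0; auto. lra.
Qed.

Definition qS (S : R) := sqrt (2 * PI * S).

Lemma z2_comp_bound z z1 z2 S f : good z z1 z2 S f -> forall t,
  Rabs (fst (z2 t)) <= qS S /\ Rabs (snd (z2 t)) <= qS S.
Proof.
  intros G.
  pose proof (good_per1 _ _ _ _ _ G) as P1. pose proof (good_per2 _ _ _ _ _ G) as P2.
  pose proof G as (_ & _ & [D2x D2y] & HS0 & _).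
  pose proof PI_RGT_0.
  assert (Hin : forall t c, -PI <= t <= PI -> -PI <= c <= PI ->
            vnorm (vsub (z2 t) (z2 c)) <= qS S).
  { intros t c Ht Hc. unfold qS, vnorm. apply sqrt_le_1_alt.
    destruct (Rtotal_order t c) as [Hlt|[Heq|Hgt]].
    - rewrite vnorm2_vsub_sym. pose proof (holder z z1 z2 S f t c G ltac:(lra) Hlt ltac:(lra)).
      nra.
    - subst. unfold vnorm2, vsub; simpl. replace (fst (z2 c) - fst (z2 c)) with 0 by ring.
      replace (snd (z2 c) - snd (z2 c)) with 0 by ring. nra.
    - pose proof (holder z z1 z2 S f c t G ltac:(lra) Hgt ltac:(lra)).
      nra. }
  destruct (periodic_deriv_zero (fun t => fst (z1 t)) (fun t => fst (z2 t))) as [cx [Hcx Ecx]].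
  { intros t. rewrite P1. auto. } { auto. }
  destruct (periodic_deriv_zero (fun t => snd (z1 t)) (fun t => snd (z2 t))) as [cy [Hcy Ecy]].
  { intros t. rewrite P1. auto. } { auto. }
  intros t. destruct (periodic_reduce z2 P2 t) as [t' [Ht' E]]. rewrite E.
  split.
  - pose proof (vnorm_fst (vsub (z2 t') (z2 cx))) as H1.
    change (fst (vsub (z2 t') (z2 cx))) with (fst (z2 t') - fst (z2 cx)) in H1.
    rewrite Ecx, Rminus_0_r in H1. pose proof (Hin t' cx ltac:(lra) ltac:(lra)). lra.
  - pose proof (vnorm_snd (vsub (z2 t') (z2 cy))) as H1.
    change (snd (vsub (z2 t') (z2 cy))) with (snd (z2 t') - snd (z2 cy)) in H1.
    rewrite Ecy, Rminus_0_r in H1. pose proof (Hin t' cy ltac:(lra) ltac:(lra)). lra.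
Qed.

Lemma qS_nonneg S : 0 <= qS S.
Proof. apply sqrt_pos. Qed.

Lemma z2_bound z z1 z2 S f : good z z1 z2 S f -> forall t, vnorm (z2 t) <= 2 * qS S.
Proof.
  intros G t. destruct (z2_comp_bound _ _ _ _ _ G t).
  apply vnorm_le_of_comp; auto. apply qS_nonneg.
Qed.

Lemma z1_comp_bound z z1 z2 S f : good z z1 z2 S f -> forall t,
  Rabs (fst (z1 t)) <= 2 * PI * qS S /\ Rabs (snd (z1 t)) <= 2 * PI * qS S.
Proof.
  intros G.
  pose proof (good_per1 _ _ _ _ _ G) as P1.
  pose proof G as (Pz & [D1x D1y] & [D2x D2y] & HS0 & _).
  pose proof PI_RGT_0. pose proof (z2_comp_bound _ _ _ _ _ G) as B2.
  destruct (periodic_deriv_zero (fun t => fst (z t)) (fun t => fst (z1 t))) as [cx [Hcx Ecx]].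
  { intros t. rewrite Pz. auto. } { auto. }
  destruct (periodic_deriv_zero (fun t => snd (z t)) (fun t => snd (z1 t))) as [cy [Hcy Ecy]].
  { intros t. rewrite Pz. auto. } { auto. }
  assert (Gen : forall (g g' : R -> R) c t, (forall s, derivable_pt_lim g s (g' s)) ->
     (forall s, Rabs (g' s) <= qS S) -> g c = 0 -> -PI < c < PI -> -PI <= t < PI ->
     Rabs (g t) <= 2 * PI * qS S).
  { intros g g' c t Hd Hb Hc Hcr Ht.
    destruct (Rtotal_order c t) as [Hlt|[Heq|Hgt]].
    - destruct (MVT_cor2 g g' c t Hlt (fun s _ => Hd s)) as [e [He _]].
      rewrite Hc, Rminus_0_r in He. rewrite He, Rabs_mult, (Rabs_right (t - c)) by lra.
      specialize (Hb e). pose proof (Rabs_pos (g' e)). pose proof (qS_nonneg S). nra.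
    - subst. rewrite Hc, Rabs_R0. pose proof (qS_nonneg S). nra.
    - destruct (MVT_cor2 g g' t c Hgt (fun s _ => Hd s)) as [e [He _]].
      rewrite Hc in He. replace (g t) with (- (g' e * (c - t))) by lra.
      rewrite Rabs_Ropp, Rabs_mult, (Rabs_right (c - t)) by lra.
      specialize (Hb e). pose proof (Rabs_pos (g' e)). pose proof (qS_nonneg S). nra. }
  intros t. destruct (periodic_reduce z1 P1 t) as [t' [Ht' E]]. rewrite E.
  split.
  - apply (Gen (fun t => fst (z1 t)) (fun t => fst (z2 t)) cx); auto. intros; apply B2.
  - apply (Gen (fun t => snd (z1 t)) (fun t => snd (z2 t)) cy); auto. intros; apply B2.
Qed.

Lemma z1_bound z z1 z2 S f : good z z1 z2 S f -> forall t, vnorm (z1 t) <= 4 * PI * qS S.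
Proof.
  intros G t. destruct (z1_comp_bound _ _ _ _ _ G t).
  replace (4 * PI * qS S) with (2 * (2 * PI * qS S)) by ring.
  apply vnorm_le_of_comp; auto. pose proof PI_RGT_0; pose proof (qS_nonneg S); nra.
Qed.

Lemma IZR_small_0 (k : Z) : -1 < IZR k < 1 -> k = 0%Z.
Proof.
  intros [H1 H2]. apply lt_IZR in H2. assert (-1 < k)%Z by (apply lt_IZR; auto). lia.
Qed.

Lemma circ_k0 x (k : Z) : Rabs (x - 2 * PI * IZR k) <= PI -> Rabs x < PI -> k = 0%Z.
Proof.
  intros H1 H2. pose proof PI_RGT_0. apply IZR_small_0.
  apply Rabs_le_inv in H1. apply Rabs_def2 in H2.
  split.
  - destruct (Rle_dec (IZR k) (-1)); [|lra]. nra.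
  - destruct (Rle_dec 1 (IZR k)); [|lra]. nra.
Qed.

Lemma circ_bound z z1 z2 S f : good z z1 z2 S f -> forall a b, exists k : Z,
  Rabs (a - b - 2 * PI * IZR k) <= PI /\ Rabs (a - b - 2 * PI * IZR k) <= f * vdist (z a) (z b).
Proof.
  intros G a b. pose proof G as (Pz & _ & _ & _ & _ & Hf & HF).
  pose proof PI_RGT_0.
  destruct (reduce_T a) as [k1 Hk1]. set (a' := a + 2 * PI * IZR k1) in *.
  destruct (round_Z ((a' - b) / (2 * PI))) as [k Hk].
  set (eta := a' - b - 2 * PI * IZR k).
  assert (Heta : Rabs eta <= PI).
  { unfold eta. replace (a' - b - 2 * PI * IZR k) with (2 * PI * ((a' - b) / (2 * PI) - IZR k))
      by (field; lra).
    rewrite Rabs_mult, Rabs_right by lra. nra. }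
  exists (k - k1)%Z. rewrite minus_IZR.
  replace (a - b - 2 * PI * (IZR k - IZR k1)) with eta by (unfold eta, a'; ring).
  split; auto.
  assert (Ea : z a = z a') by (unfold a'; rewrite periodic_Z; auto).
  assert (Eb : z b = z (a' - eta)).
  { replace (a' - eta) with (b + 2 * PI * IZR k) by (unfold eta; ring). rewrite periodic_Z; auto. }
  rewrite Ea, Eb.
  destruct (Req_dec eta 0) as [E0|Nz].
  - rewrite E0, Rabs_R0. apply Rmult_le_pos; [lra|apply vdist_nonneg].
  - destruct (HF a' eta) as [Hne Hq]; auto.
    + unfold inT; lra.
    + apply Rabs_le_inv in Heta. unfold inT; lra.
    + pose proof (vdist_pos _ _ Hne) as Hp.
      apply (Rmult_le_compat_r (vdist (z a') (z (a' - eta)))) in Hq; [|lra].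
      unfold Rdiv in Hq. rewrite Rmult_assoc, Rinv_l in Hq by lra. lra.
Qed.

Lemma same_point_k z z1 z2 S f a b : good z z1 z2 S f -> z a = z b ->
  exists k : Z, a = b + 2 * PI * IZR k.
Proof.
  intros G E. destruct (circ_bound _ _ _ _ _ G a b) as [k [_ Hk]].
  rewrite E, vdist_self, Rmult_0_r in Hk. exists k.
  pose proof (Rabs_pos (a - b - 2 * PI * IZR k)).
  apply Rabs_le_inv in Hk. lra.
Qed.

Lemma same_point z z1 z2 S f a b : good z z1 z2 S f -> z a = z b ->
  z1 a = z1 b /\ z2 a = z2 b.
Proof.
  intros G E. destruct (same_point_k _ _ _ _ _ _ _ G E) as [k Hk]. subst a.
  split; apply periodic_Z; [eapply good_per1|eapply good_per2]; eauto.
Qed.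

Lemma small_sep z z1 z2 S f a b : good z z1 z2 S f -> Rabs (a - b) < PI ->
  Rabs (a - b) <= f * vdist (z a) (z b).
Proof.
  intros G H. destruct (circ_bound _ _ _ _ _ G a b) as [k [H1 H2]].
  assert (k = 0%Z) by (eapply circ_k0; eauto). subst k.
  replace (a - b - 2 * PI * IZR 0) with (a - b) in H2 by (simpl; ring). auto.
Qed.

Lemma speed_lower z z1 z2 S f : good z z1 z2 S f -> forall t, / f <= vnorm (z1 t).
Proof.
  intros G t. pose proof G as (Pz & [Dx Dy] & _ & _ & _ & Hf & _).
  pose proof PI_RGT_0.
  destruct (Rle_dec (/ f) (vnorm (z1 t))) as [|Hn]; auto. exfalso.
  apply Rnot_le_lt in Hn.
  set (eps := (/ f - vnorm (z1 t)) / 4).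
  assert (Heps : 0 < eps) by (unfold eps; lra).
  destruct (Dx t eps Heps) as [d1 Hd1]. destruct (Dy t eps Heps) as [d2 Hd2].
  set (h := Rmin (Rmin d1 d2) PI / 2).
  pose proof (cond_pos d1); pose proof (cond_pos d2).
  assert (Hm1 : Rmin (Rmin d1 d2) PI <= d1) by (eapply Rle_trans; [apply Rmin_l|apply Rmin_l]).
  assert (Hm2 : Rmin (Rmin d1 d2) PI <= d2) by (eapply Rle_trans; [apply Rmin_l|apply Rmin_r]).
  assert (Hm3 : Rmin (Rmin d1 d2) PI <= PI) by apply Rmin_r.
  assert (Hm0 : 0 < Rmin (Rmin d1 d2) PI) by (repeat apply Rmin_pos; auto).
  assert (Hh0 : 0 < h) by (unfold h; lra).
  assert (Hah : Rabs h = h) by (apply Rabs_right; lra).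
  specialize (Hd1 h ltac:(lra) ltac:(rewrite Hah; unfold h; lra)).
  specialize (Hd2 h ltac:(lra) ltac:(rewrite Hah; unfold h; lra)).
  set (w := vscale (/ h) (vsub (z (t + h)) (z t))).
  assert (Hw1 : vnorm w = vdist (z (t + h)) (z t) / h).
  { unfold w. rewrite vnorm_scale. rewrite Rabs_right.
    unfold vdist, Rdiv. ring. left; apply Rinv_0_lt_compat; auto. }
  assert (Hw2 : h <= f * vdist (z (t + h)) (z t)).
  { pose proof (small_sep z z1 z2 S f (t + h) t G) as Hs.
    replace (t + h - t) with h in Hs by ring. rewrite Hah in Hs. apply Hs. unfold h; lra. }
  assert (Hw3 : / f <= vnorm w).
  { rewrite Hw1. apply (Rmult_le_reg_l f). lra.
    rewrite Rinv_r by lra. unfold Rdiv. apply (Rmult_le_reg_r h); auto.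
    rewrite !Rmult_assoc, Rinv_l by lra. lra. }
  assert (Hw4 : vnorm (vsub w (z1 t)) <= 2 * eps).
  { apply vnorm_le_of_comp; [lra| |].
    - unfold w, vsub, vscale; simpl. left.
      replace (/ h * (fst (z (t + h)) - fst (z t)) - fst (z1 t)) with
        ((fst (z (t + h)) - fst (z t)) / h - fst (z1 t)) by (field; lra). auto.
    - unfold w, vsub, vscale; simpl. left.
      replace (/ h * (snd (z (t + h)) - snd (z t)) - snd (z1 t)) with
        ((snd (z (t + h)) - snd (z t)) / h - snd (z1 t)) by (field; lra). auto. }
  assert (Hw5 : vnorm w <= vnorm (z1 t) + vnorm (vsub w (z1 t))).
  { replace w with (vadd (z1 t) (vsub w (z1 t))) at 1.
    apply vnorm_triangle. destruct w, (z1 t); unfold vadd, vsub; simpl; f_equal; ring. }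
  unfold eps in *. lra.
Qed.

Lemma cpt_plus f g x : continuity_pt f x -> continuity_pt g x -> continuity_pt (fun s => f s + g s) x.
Proof. intros. apply (continuity_pt_plus f g x); auto. Qed.
Lemma cpt_minus f g x : continuity_pt f x -> continuity_pt g x -> continuity_pt (fun s => f s - g s) x.
Proof. intros. apply (continuity_pt_minus f g x); auto. Qed.
Lemma cpt_mult f g x : continuity_pt f x -> continuity_pt g x -> continuity_pt (fun s => f s * g s) x.
Proof. intros. apply (continuity_pt_mult f g x); auto. Qed.
Lemma cpt_const c x : continuity_pt (fun _ => c) x.
Proof. apply continuity_pt_const. intros a b; auto. Qed.
Lemma cpt_id x : continuity_pt (fun s => s) x.
Proof. apply derivable_continuous_pt. apply derivable_pt_id. Qed.
Lemma cpt_comp f g x : continuity_pt g x -> continuity_pt f (g x) -> continuity_pt (fun s => f (g s)) x.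
Proof. intros. apply (continuity_pt_comp g f x); auto. Qed.
Lemma cpt_abs f x : continuity_pt f x -> continuity_pt (fun s => Rabs (f s)) x.
Proof. intros. apply cpt_comp; auto. apply Rcontinuity_abs. Qed.
Lemma cpt_deriv f x l : derivable_pt_lim f x l -> continuity_pt f x.
Proof. intros H. apply derivable_continuous_pt. exists l. exact H. Qed.

Definition segpt (p q : pt) (lam : R) : pt := vadd p (vscale lam (vsub q p)).

Lemma joinable_seg z p q x :
  (forall lam, 0 <= lam <= 1 -> ~ on_curve z (segpt p q lam)) ->
  joinable_avoiding z p x -> joinable_avoiding z q x.
Proof.
  intros Hseg (g & Cx & Cy & G0 & G1 & Gav).
  set (M := fun s : R => (2 * s - 1 + Rabs (2 * s - 1)) / 2).
  set (m := fun s : R => (1 + 2 * s - Rabs (1 - 2 * s)) / 2).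
  assert (CM : forall s, continuity_pt M s).
  { intros s. unfold M. apply cpt_mult; [|apply cpt_const].
    apply cpt_plus; [|apply cpt_abs]; apply cpt_minus; try apply cpt_mult; try apply cpt_const; apply cpt_id. }
  assert (Cm : forall s, continuity_pt m s).
  { intros s. unfold m. apply cpt_mult; [|apply cpt_const].
    apply cpt_minus; [apply cpt_plus; [apply cpt_const| apply cpt_mult; [apply cpt_const|apply cpt_id]]|].
    apply cpt_abs. apply cpt_minus; [apply cpt_const| apply cpt_mult; [apply cpt_const|apply cpt_id]]. }
  exists (fun s => vadd (g (M s)) (vscale (1 - m s) (vsub q p))).
  assert (Mlo : forall s, s <= /2 -> M s = 0).
  { intros s Hs. unfold M. rewrite Rabs_left1 by lra. field. }
  assert (mlo : forall s, s <= /2 -> m s = 2 * s).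
  { intros s Hs. unfold m. rewrite Rabs_right by lra. field. }
  assert (Mhi : forall s, /2 <= s -> M s = 2 * s - 1).
  { intros s Hs. unfold M. rewrite Rabs_right by lra. field. }
  assert (mhi : forall s, /2 <= s -> m s = 1).
  { intros s Hs. unfold m. rewrite Rabs_left1 by lra. field. }
  split; [|split; [|split; [|split]]].
  - intros s. apply (cpt_plus (fun s => fst (g (M s))) (fun s => (1 - m s) * fst (vsub q p))).
    + apply (cpt_comp (fun u => fst (g u)) M); [apply CM| apply Cx].
    + apply (cpt_mult (fun s => 1 - m s) (fun _ => fst (vsub q p))); [apply cpt_minus; [apply cpt_const|auto]|apply cpt_const].
  - intros s. apply (cpt_plus (fun s => snd (g (M s))) (fun s => (1 - m s) * snd (vsub q p))).
    + apply (cpt_comp (fun u => snd (g u)) M); [apply CM| apply Cy].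
    + apply (cpt_mult (fun s => 1 - m s) (fun _ => snd (vsub q p))); [apply cpt_minus; [apply cpt_const|auto]|apply cpt_const].
  - rewrite Mlo, mlo by lra. rewrite G0. destruct p, q; unfold vadd, vscale, vsub; simpl; f_equal; ring.
  - rewrite Mhi, mhi by lra. replace (2 * 1 - 1) with 1 by ring. rewrite G1.
    destruct x, q, p; unfold vadd, vscale, vsub; simpl; f_equal; ring.
  - intros s Hs. destruct (Rle_dec s (/2)) as [Hl|Hh].
    + rewrite Mlo, mlo by lra. rewrite G0.
      replace (vadd p (vscale (1 - 2 * s) (vsub q p))) with (segpt p q (1 - 2 * s)) by reflexivity.
      apply Hseg. lra.
    + rewrite Mhi, mhi by lra.
      replace (vadd (g (2 * s - 1)) (vscale (1 - 1) (vsub q p))) with (g (2 * s - 1)).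
      apply Gav; lra. destruct (g (2*s-1)); unfold vadd, vscale; simpl; f_equal; ring.
Qed.

Lemma segpt_dist p q lam : 0 <= lam <= 1 -> vdist (segpt p q lam) p <= vdist q p.
Proof.
  intros H. unfold vdist, segpt.
  replace (vsub (vadd p (vscale lam (vsub q p))) p) with (vscale lam (vsub q p))
    by (destruct p, q; unfold vsub, vadd, vscale; simpl; f_equal; ring).
  rewrite vnorm_scale, Rabs_right by lra. pose proof (vnorm_nonneg (vsub q p)). nra.
Qed.

Lemma segpt_sym p q lam : segpt q p lam = segpt p q (1 - lam).
Proof. destruct p, q; unfold segpt, vsub, vadd, vscale; simpl; f_equal; ring. Qed.

Lemma curve_away z z1 z2 S f p : good z z1 z2 S f -> ~ on_curve z p ->
  exists r, 0 < r /\ forall t, r <= vdist (z t) p.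
Proof.
  intros G Hp. pose proof G as (Pz & [Dx Dy] & _).
  pose proof PI_RGT_0.
  set (h := fun t => vnorm2 (vsub (z t) p)).
  destruct (continuity_ab_min h (-PI) PI) as [mx [Hmx Hmr]]; [lra| |].
  { intros c _. unfold h, vnorm2, vsub; simpl.
    apply cpt_plus; apply cpt_mult; apply cpt_minus; try apply cpt_const;
      eapply cpt_deriv; [apply Dx|apply Dx|apply Dy|apply Dy]. }
  assert (Hpos : 0 < h mx).
  { unfold h. destruct (vnorm2_nonneg (vsub (z mx) p)) as [|E]; auto.
    exfalso. apply Hp. exists mx. apply vdist_eq0. unfold vdist, vnorm. rewrite <- E. apply sqrt_0. }
  exists (sqrt (h mx)). split. apply sqrt_lt_R0; auto.
  intros t. destruct (periodic_reduce z Pz t) as [t' [Ht' E]]. rewrite E.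
  unfold vdist, vnorm. apply sqrt_le_1_alt. apply Hmx. lra.
Qed.

Lemma interior_near z p q :
  (forall lam, 0 <= lam <= 1 -> ~ on_curve z (segpt p q lam)) ->
  curve_interior z p -> curve_interior z q.
Proof.
  intros Hseg [Hp [M HM]]. split.
  - replace q with (segpt p q 1). apply Hseg; lra.
    destruct p, q; unfold segpt, vsub, vadd, vscale; simpl; f_equal; ring.
  - exists M. intros x Hx. apply HM.
    apply (joinable_seg z q p).
    + intros lam Hl. rewrite segpt_sym. apply Hseg. lra.
    + auto.
Qed.

Lemma boundary_on_curve z z1 z2 S f p : good z z1 z2 S f ->
  boundary (curve_interior z) p -> on_curve z p.
Proof.
  intros G Hb. destruct (Classical_Prop.classic (on_curve z p)) as [|Hn]; auto. exfalso.
  destruct (curve_away _ _ _ _ _ _ G Hn) as [r [Hr Hd]].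
  destruct (Hb r Hr) as [[q1 [Hq1 Dq1]] [q2 [Hq2 Dq2]]].
  assert (Av : forall q lam, vdist p q < r -> 0 <= lam <= 1 -> ~ on_curve z (segpt p q lam)).
  { intros q lam Hq Hl [t Ht]. pose proof (segpt_dist p q lam Hl). rewrite vdist_sym in Hq.
    specialize (Hd t). rewrite Ht in Hd. lra. }
  assert (Av' : forall q lam, vdist p q < r -> 0 <= lam <= 1 -> ~ on_curve z (segpt q p lam)).
  { intros q lam Hq Hl. rewrite segpt_sym. apply Av; auto. lra. }
  apply Hq2. apply (interior_near z p q2). intros; apply Av; auto.
  apply (interior_near z q1 p). intros; apply Av'; auto. auto.
Qed.

Lemma dpl_loc f g x l : (exists d, 0 < d /\ forall t, Rabs (t - x) < d -> f t = g t) ->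
  derivable_pt_lim f x l -> derivable_pt_lim g x l.
Proof.
  intros [d [Hd E]] H eps Heps. destruct (H eps Heps) as [d1 Hd1].
  assert (Hp : 0 < Rmin d1 d) by (apply Rmin_pos; auto; apply cond_pos).
  exists (mkposreal _ Hp). intros h Hh Hhd. simpl in Hhd.
  rewrite <- !E. apply Hd1; auto. eapply Rlt_le_trans; [apply Hhd|apply Rmin_l].
  replace (x - x) with 0 by ring. rewrite Rabs_R0; auto.
  replace (x + h - x) with h by ring. eapply Rlt_le_trans; [apply Hhd|apply Rmin_r].
Qed.

Lemma dpl_plus f g x l1 l2 : derivable_pt_lim f x l1 -> derivable_pt_lim g x l2 ->
  derivable_pt_lim (fun s => f s + g s) x (l1 + l2).
Proof. intros. apply (derivable_pt_lim_plus f g x l1 l2); auto. Qed.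
Lemma dpl_minus f g x l1 l2 : derivable_pt_lim f x l1 -> derivable_pt_lim g x l2 ->
  derivable_pt_lim (fun s => f s - g s) x (l1 - l2).
Proof. intros. apply (derivable_pt_lim_minus f g x l1 l2); auto. Qed.
Lemma dpl_mult f g x l1 l2 : derivable_pt_lim f x l1 -> derivable_pt_lim g x l2 ->
  derivable_pt_lim (fun s => f s * g s) x (l1 * g x + f x * l2).
Proof. intros. apply (derivable_pt_lim_mult f g x l1 l2); auto. Qed.
Lemma dpl_div f g x l1 l2 : derivable_pt_lim f x l1 -> derivable_pt_lim g x l2 -> g x <> 0 ->
  derivable_pt_lim (fun s => f s / g s) x ((l1 * g x - l2 * f x) / (g x * g x)).
Proof. intros. apply (derivable_pt_lim_div f g x l1 l2); auto. Qed.
Lemma dpl_const c x : derivable_pt_lim (fun _ => c) x 0.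
Proof. apply derivable_pt_lim_const. Qed.
Lemma dpl_comp f g x l1 l2 : derivable_pt_lim g x l1 -> derivable_pt_lim f (g x) l2 ->
  derivable_pt_lim (fun s => f (g s)) x (l2 * l1).
Proof. intros. apply (derivable_pt_lim_comp g f x l1 l2); auto. Qed.
Lemma dpl_sqrt g x l : derivable_pt_lim g x l -> 0 < g x ->
  derivable_pt_lim (fun s => sqrt (g s)) x (/ (2 * sqrt (g x)) * l).
Proof. intros. apply dpl_comp; auto. apply derivable_pt_lim_sqrt; auto. Qed.
Lemma dpl_eq f x l l' : l = l' -> derivable_pt_lim f x l -> derivable_pt_lim f x l'.
Proof. intros; subst; auto. Qed.

Lemma dpl_pos f x l : derivable_pt_lim f x l -> 0 < l ->
  exists d, 0 < d /\ forall h, 0 < h < d -> f x < f (x + h) /\ f (x - h) < f x.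
Proof.
  intros H Hl. destruct (H l Hl) as [d Hd]. exists d. split; [apply cond_pos|].
  intros h Hh. split.
  - specialize (Hd h ltac:(lra) ltac:(rewrite Rabs_right; lra)).
    apply Rabs_def2 in Hd. destruct Hd as [_ Hd].
    assert (0 < (f (x + h) - f x) / h) by lra.
    apply (Rmult_lt_compat_r h) in H0; [|lra]. unfold Rdiv in H0.
    rewrite Rmult_assoc, Rinv_l, Rmult_0_l in H0 by lra. lra.
  - specialize (Hd (-h) ltac:(lra) ltac:(rewrite Rabs_left; lra)).
    apply Rabs_def2 in Hd. destruct Hd as [_ Hd].
    assert (0 < (f (x + - h) - f x) / - h) by lra.
    apply (Rmult_lt_compat_r h) in H0; [|lra].
    replace ((f (x + - h) - f x) / - h * h) with (f x - f (x + - h)) in H0 by (field; lra).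
    replace (x - h) with (x + - h) by ring. lra.
Qed.

Lemma dpl_opp f x l : derivable_pt_lim f x l -> derivable_pt_lim (fun s => - f s) x (- l).
Proof. intros. apply (derivable_pt_lim_opp f x l); auto. Qed.

Lemma small_pos d w : 0 < d -> 0 < w -> exists h, 0 < h /\ h < d /\ h < w.
Proof.
  intros. exists (Rmin d w / 2). pose proof (Rmin_l d w); pose proof (Rmin_r d w).
  assert (0 < Rmin d w) by (apply Rmin_pos; auto). lra.
Qed.

Lemma sign_const_aux (phi phi' : R -> R) a b :
  (forall s, a < s < b -> derivable_pt_lim phi s (phi' s) /\ phi' s <> 0) ->
  forall s1 s2, a < s1 -> s1 < s2 -> s2 < b -> 0 < phi' s1 -> 0 < phi' s2.
Proof.
  intros H s1 s2 H1 H12 H2 P1.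
  destruct (Rlt_dec 0 (phi' s2)) as [|N]; auto. exfalso.
  assert (N2 : phi' s2 < 0) by (destruct (H s2 ltac:(lra)); lra).
  destruct (continuity_ab_maj phi s1 s2) as [m [Hm Hmr]]; [lra| |].
  { intros c Hc. apply derivable_continuous_pt. exists (phi' c). apply H. lra. }
  destruct (dpl_pos phi s1 (phi' s1)) as [d1 [Hd1 P]]; [apply H; lra| auto |].
  pose proof (dpl_opp phi s2 (phi' s2) ltac:(apply H; lra)) as Hop.
  destruct (dpl_pos _ s2 _ Hop) as [d2 [Hd2 Q]]; [lra|].
  destruct (Req_dec m s1) as [E|Ne1].
  { subst m. destruct (small_pos d1 (s2 - s1) ltac:(lra) ltac:(lra)) as [h [? [? ?]]].
    destruct (P h ltac:(lra)). specialize (Hm (s1 + h) ltac:(lra)). lra. }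
  destruct (Req_dec m s2) as [E|Ne2].
  { subst m. destruct (small_pos d2 (s2 - s1) ltac:(lra) ltac:(lra)) as [h [? [? ?]]].
    destruct (Q h ltac:(lra)). specialize (Hm (s2 - h) ltac:(lra)). lra. }
  assert (Hmi : s1 < m < s2) by lra.
  destruct (H m ltac:(lra)) as [Dm Nm].
  destruct (Rlt_dec 0 (phi' m)) as [Pm|Pm].
  - destruct (dpl_pos phi m _ Dm Pm) as [d3 [Hd3 R3]].
    destruct (small_pos d3 (s2 - m) ltac:(lra) ltac:(lra)) as [h [? [? ?]]].
    destruct (R3 h ltac:(lra)). specialize (Hm (m + h) ltac:(lra)). lra.
  - assert (phi' m < 0) by lra.
    pose proof (dpl_opp phi m _ Dm) as Hop'.
    destruct (dpl_pos _ m _ Hop') as [d3 [Hd3 R3]]; [lra|].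
    destruct (small_pos d3 (m - s1) ltac:(lra) ltac:(lra)) as [h [? [? ?]]].
    destruct (R3 h ltac:(lra)). specialize (Hm (m - h) ltac:(lra)). lra.
Qed.

Lemma sign_const (phi phi' : R -> R) a b :
  (forall s, a < s < b -> derivable_pt_lim phi s (phi' s) /\ phi' s <> 0) ->
  forall s1 s2, a < s1 < b -> a < s2 < b -> 0 < phi' s1 -> 0 < phi' s2.
Proof.
  intros H s1 s2 H1 H2 P.
  destruct (Rtotal_order s1 s2) as [Hl|[He|Hg]].
  - eapply sign_const_aux; eauto; lra.
  - subst; auto.
  - destruct (Rlt_dec 0 (phi' s2)) as [|N]; auto. exfalso.
    assert (N2 : 0 < - phi' s2) by (destruct (H s2 H2); lra).
    assert (H' : forall s, a < s < b -> derivable_pt_lim (fun s => - phi s) s (- phi' s) /\ - phi' s <> 0).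
    { intros s Hs. destruct (H s Hs). split. apply dpl_opp; auto. lra. }
    pose proof (sign_const_aux (fun s => - phi s) (fun s => - phi' s) a b H' s2 s1 ltac:(lra) Hg ltac:(lra) N2).
    simpl in H0. lra.
Qed.

Definition dotp (p q : pt) : R := fst p * fst q + snd p * snd q.

Lemma alg_key ux uy wx wy ex ey rx ry h dt K e1 e2 :
  0 < ux*ux+uy*uy -> h <> 0 -> 0 <= K -> 0 <= e1 ->
  dt*ux = h*(wx+ex) - rx -> dt*uy = h*(wy+ey) - ry ->
  Rabs ex <= e2 -> Rabs ey <= e2 -> Rabs rx <= e1 * Rabs dt -> Rabs ry <= e1 * Rabs dt ->
  Rabs dt <= K * Rabs h ->
  Rabs (dt/h - (ux*wx+uy*wy)/(ux*ux+uy*uy)) <= (Rabs ux + Rabs uy) * (e2 + e1*K) / (ux*ux+uy*uy).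
Proof.
  intros HU Hh HK He1 E1 E2 Hex Hey Hrx Hry Hdt.
  set (U := ux*ux+uy*uy) in *.
  assert (Edt : dt = (ux*(h*(wx+ex) - rx) + uy*(h*(wy+ey)-ry))/U).
  { unfold U in *. apply (Rmult_eq_reg_r (ux*ux+uy*uy)); [|lra].
    field_simplify; [|lra]. nra. }
  assert (E : dt/h - (ux*wx+uy*wy)/U = ((ux*ex + uy*ey) - (ux*rx+uy*ry)/h)/U).
  { rewrite Edt. field. split; auto. unfold U in *; lra. }
  rewrite E. unfold Rdiv at 1. rewrite Rabs_mult, (Rabs_right (/U)) by (left; apply Rinv_0_lt_compat; auto).
  unfold Rdiv. apply Rmult_le_compat_r; [left; apply Rinv_0_lt_compat; auto|].
  assert (Hrh : Rabs (/h) * Rabs dt <= K).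
  { apply (Rmult_le_reg_l (Rabs h)). apply Rabs_pos_lt; auto.
    rewrite <- Rmult_assoc, <- Rabs_mult, Rinv_r, Rabs_R1 by auto. lra. }
  pose proof (Rabs_pos ux); pose proof (Rabs_pos uy); pose proof (Rabs_pos (/h)); pose proof (Rabs_pos dt).
  pose proof (Rabs_pos ex); pose proof (Rabs_pos ey); pose proof (Rabs_pos rx); pose proof (Rabs_pos ry).
  eapply Rle_trans; [apply Rabs_triang|]. rewrite Rabs_Ropp.
  eapply Rle_trans; [apply Rplus_le_compat; [apply Rabs_triang|]|].
  { rewrite Rabs_mult. apply Rmult_le_compat_r; [apply Rabs_pos|]. apply Rabs_triang. }
  rewrite !Rabs_mult.
  assert (Rabs rx * Rabs (/h) <= e1 * K) by nra.
  assert (Rabs ry * Rabs (/h) <= e1 * K) by nra.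
  nra.
Qed.

Definition ycond (z y y1 : curve) (c : R) : Prop :=
  periodic y /\ Dc y y1 /\ (forall t, vnorm (y1 t) = c) /\ 0 < c /\ (forall t, on_curve z (y t)).

Lemma comp_lip (g g' : R -> R) c s s' : (forall t, derivable_pt_lim g t (g' t)) ->
  (forall t, Rabs (g' t) <= c) -> Rabs (g s - g s') <= c * Rabs (s - s').
Proof.
  intros Hd Hb. destruct (Rtotal_order s s') as [Hl|[He|Hg]].
  - destruct (MVT_cor2 g g' s s' Hl (fun t _ => Hd t)) as [e [He _]].
    replace (g s - g s') with (- (g s' - g s)) by ring. rewrite He, Rabs_Ropp, Rabs_mult.
    rewrite (Rabs_left (s - s')) by lra. rewrite (Rabs_right (s' - s)) by lra.
    replace (- (s - s')) with (s' - s) by ring. apply Rmult_le_compat_r; auto. lra.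
  - subst. replace (s' - s') with 0 by ring. replace (g s' - g s') with 0 by ring. rewrite Rabs_R0, Rmult_0_r. lra.
  - destruct (MVT_cor2 g g' s' s Hg (fun t _ => Hd t)) as [e [He _]].
    rewrite He, Rabs_mult. rewrite (Rabs_right (s - s')) by lra.
    apply Rmult_le_compat_r; auto. lra.
Qed.

Lemma y_lip z y y1 c : ycond z y y1 c -> forall s s', vdist (y s) (y s') <= 2 * c * Rabs (s - s').
Proof.
  intros (Py & [Dx Dy] & Hc & Hc0 & _) s s'.
  rewrite Rmult_assoc. apply vnorm_le_of_comp.
  - apply Rmult_le_pos; [lra|apply Rabs_pos].
  - change (fst (vsub (y s) (y s'))) with (fst (y s) - fst (y s')).
    apply (comp_lip (fun t => fst (y t)) (fun t => fst (y1 t))); auto.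
    intros t. rewrite <- (Hc t). apply vnorm_fst.
  - change (snd (vsub (y s) (y s'))) with (snd (y s) - snd (y s')).
    apply (comp_lip (fun t => snd (y t)) (fun t => snd (y1 t))); auto.
    intros t. rewrite <- (Hc t). apply vnorm_snd.
Qed.

Lemma vnorm2_pos_of z z1 z2 S f t : good z z1 z2 S f -> 0 < vnorm2 (z1 t).
Proof.
  intros G. pose proof (speed_lower _ _ _ _ _ G t). pose proof G as (_ & _ & _ & _ & _ & Hf & _).
  assert (0 < / f) by (apply Rinv_0_lt_compat; lra).
  rewrite <- vnorm_sq. nra.
Qed.


Lemma lift_deriv z z1 z2 S f y y1 c a b L K d0 :
  good z z1 z2 S f -> ycond z y y1 c -> 0 <= K -> 0 < d0 ->
  (forall s, a < s < b -> z (L s) = y s) ->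
  (forall s s', a < s < b -> a < s' < b -> Rabs (s - s') < d0 -> Rabs (L s - L s') <= K * Rabs (s - s')) ->
  forall s, a < s < b -> derivable_pt_lim L s (dotp (z1 (L s)) (y1 s) / vnorm2 (z1 (L s))).
Proof.
  intros G Y HK Hd0 HL Hlip s Hs.
  pose proof G as (Pz & [Dzx Dzy] & _ & _ & _ & Hf & _).
  pose proof Y as (Py & [Dyx Dyy] & Hc & Hc0 & _).
  pose proof (vnorm2_pos_of _ _ _ _ _ (L s) G) as HU.
  set (u := z1 (L s)) in *.
  set (A := Rabs (fst u) + Rabs (snd u)).
  assert (HA : 0 <= A) by (unfold A; pose proof (Rabs_pos (fst u)); pose proof (Rabs_pos (snd u)); lra).
  intros eps Heps.
  set (e1 := eps * vnorm2 u / (4 * (A+1) * (K+1))).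
  set (e2 := eps * vnorm2 u / (4*(A+1))).
  assert (He1 : 0 < e1) by (unfold e1; apply Rdiv_lt_0_compat; [nra|nra]).
  assert (He2 : 0 < e2) by (unfold e2; apply Rdiv_lt_0_compat; [nra|nra]).
  destruct (Dzx (L s) e1 He1) as [d1 Hd1]. destruct (Dzy (L s) e1 He1) as [d1' Hd1'].
  destruct (Dyx s e2 He2) as [d2 Hd2]. destruct (Dyy s e2 He2) as [d2' Hd2'].
  pose proof (cond_pos d1); pose proof (cond_pos d1'); pose proof (cond_pos d2); pose proof (cond_pos d2').
  set (m1 := Rmin d1 d1').
  assert (Hm1 : 0 < m1) by (apply Rmin_pos; auto).
  set (dl := Rmin (Rmin d2 d2') (Rmin (m1 / (K+1)) (Rmin (Rmin (b - s) (s - a)) d0))).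
  assert (Hdl : 0 < dl).
  { unfold dl. repeat apply Rmin_pos; try lra. apply Rdiv_lt_0_compat; lra. }
  exists (mkposreal dl Hdl). intros h Hh Hhd. simpl in Hhd.
  assert (B1 : Rabs h < d2) by (eapply Rlt_le_trans; [apply Hhd|]; unfold dl; eapply Rle_trans; [apply Rmin_l|apply Rmin_l]).
  assert (B2 : Rabs h < d2') by (eapply Rlt_le_trans; [apply Hhd|]; unfold dl; eapply Rle_trans; [apply Rmin_l|apply Rmin_r]).
  assert (B3 : Rabs h < m1 / (K+1)).
  { eapply Rlt_le_trans; [apply Hhd|]; unfold dl. eapply Rle_trans; [apply Rmin_r|apply Rmin_l]. }
  assert (B4 : Rabs h < Rmin (b - s) (s - a)).
  { eapply Rlt_le_trans; [apply Hhd|]; unfold dl. eapply Rle_trans; [apply Rmin_r|].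
    eapply Rle_trans; [apply Rmin_r|apply Rmin_l]. }
  assert (B5 : Rabs h < d0).
  { eapply Rlt_le_trans; [apply Hhd|]; unfold dl. eapply Rle_trans; [apply Rmin_r|].
    eapply Rle_trans; [apply Rmin_r|apply Rmin_r]. }
  pose proof (Rmin_l (b - s) (s - a)); pose proof (Rmin_r (b - s) (s - a)).
  apply Rabs_def2 in B4 as B4'.
  assert (Hsh : a < s + h < b) by lra.
  set (dt := L (s + h) - L s).
  assert (Hdt : Rabs dt <= K * Rabs h).
  { unfold dt. replace h with (s + h - s) at 2 by ring. apply Hlip; auto.
    replace (s + h - s) with h by ring. auto. }
  assert (Hdt2 : Rabs dt < m1).
  { apply (Rmult_lt_compat_r (K+1)) in B3; [|lra]. unfold Rdiv in B3.
    rewrite Rmult_assoc, Rinv_l, Rmult_1_r in B3 by lra. pose proof (Rabs_pos h). nra. }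
  assert (Hdt3 : Rabs dt < d1) by (eapply Rlt_le_trans; [apply Hdt2| apply Rmin_l]).
  assert (Hdt4 : Rabs dt < d1') by (eapply Rlt_le_trans; [apply Hdt2| apply Rmin_r]).
  assert (Ez1 : z (L (s + h)) = y (s + h)) by (apply HL; auto).
  assert (Ez0 : z (L s) = y s) by (apply HL; auto).
  assert (ELd : L (s + h) = L s + dt) by (unfold dt; ring).
  set (rx := (fst (y (s+h)) - fst (y s)) - fst u * dt).
  set (ry := (snd (y (s+h)) - snd (y s)) - snd u * dt).
  assert (Hrx : Rabs rx <= e1 * Rabs dt).
  { destruct (Req_dec dt 0) as [Z0|NZ].
    - unfold rx. rewrite <- Ez1, <- Ez0, ELd, Z0, Rplus_0_r.
      replace (fst (z (L s)) - fst (z (L s)) - fst u * 0) with 0 by ring. rewrite Rabs_R0. lra.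
    - specialize (Hd1 dt NZ Hdt3). rewrite <- ELd, Ez1, Ez0 in Hd1.
      replace ((fst (y (s + h)) - fst (y s)) / dt - fst (z1 (L s))) with (rx / dt) in Hd1
        by (unfold rx, u; field; auto).
      unfold Rdiv in Hd1. rewrite Rabs_mult, Rabs_inv in Hd1 by auto.
      apply (Rmult_lt_compat_r (Rabs dt)) in Hd1; [|apply Rabs_pos_lt; auto].
      rewrite Rmult_assoc, Rinv_l, Rmult_1_r in Hd1 by (apply Rabs_no_R0; auto). lra. }
  assert (Hry : Rabs ry <= e1 * Rabs dt).
  { destruct (Req_dec dt 0) as [Z0|NZ].
    - unfold ry. rewrite <- Ez1, <- Ez0, ELd, Z0, Rplus_0_r.
      replace (snd (z (L s)) - snd (z (L s)) - snd u * 0) with 0 by ring. rewrite Rabs_R0. lra.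
    - specialize (Hd1' dt NZ Hdt4). rewrite <- ELd, Ez1, Ez0 in Hd1'.
      replace ((snd (y (s + h)) - snd (y s)) / dt - snd (z1 (L s))) with (ry / dt) in Hd1'
        by (unfold ry, u; field; auto).
      unfold Rdiv in Hd1'. rewrite Rabs_mult, Rabs_inv in Hd1' by auto.
      apply (Rmult_lt_compat_r (Rabs dt)) in Hd1'; [|apply Rabs_pos_lt; auto].
      rewrite Rmult_assoc, Rinv_l, Rmult_1_r in Hd1' by (apply Rabs_no_R0; auto). lra. }
  set (ex := (fst (y (s + h)) - fst (y s)) / h - fst (y1 s)).
  set (ey := (snd (y (s + h)) - snd (y s)) / h - snd (y1 s)).
  specialize (Hd2 h Hh B1). specialize (Hd2' h Hh B2).
  pose proof (alg_key (fst u) (snd u) (fst (y1 s)) (snd (y1 s)) ex ey rx ry h dt K e1 e2) as AK.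
  unfold vnorm2 in HU.
  specialize (AK HU Hh HK ltac:(lra)).
  specialize (AK ltac:(unfold ex, rx; field; auto) ltac:(unfold ey, ry; field; auto)).
  specialize (AK ltac:(unfold ex; lra) ltac:(unfold ey; lra) Hrx Hry Hdt).
  unfold dotp, vnorm2. fold dt. eapply Rle_lt_trans; [apply AK|].
  fold A.
  set (U := fst u * fst u + snd u * snd u) in *.
  assert (Eb : A * (e2 + e1 * K) / U = eps * A / (4 * (A+1)) * (1 + K / (K+1))).
  { unfold e1, e2, vnorm2. fold U. field. repeat split; lra. }
  rewrite Eb.
  assert (A / (A + 1) < 1) by (apply (Rmult_lt_reg_r (A+1)); [lra|]; unfold Rdiv; rewrite Rmult_assoc, Rinv_l by lra; lra).
  assert (K / (K + 1) < 1) by (apply (Rmult_lt_reg_r (K+1)); [lra|]; unfold Rdiv; rewrite Rmult_assoc, Rinv_l by lra; lra).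
  assert (0 <= K / (K+1)) by (apply Rdiv_le_0_compat; lra).
  assert (0 <= A / (A+1)) by (apply Rdiv_le_0_compat; lra).
  replace (eps * A / (4 * (A + 1)) * (1 + K / (K + 1))) with (eps / 4 * ((A / (A+1)) * (1 + K / (K+1)))) by (field; lra).
  set (a1 := A / (A+1)) in *. set (k1 := K / (K+1)) in *.
  assert (a1 * (1 + k1) < 2) by nra.
  nra.
Qed.

Definition liftok (z y : curve) (a b : R) (L : R -> R) (K : R) : Prop :=
  0 <= K /\ (forall s, a < s < b -> z (L s) = y s) /\
  exists d0, 0 < d0 /\
  (forall s s', a < s < b -> a < s' < b -> Rabs (s - s') < d0 -> Rabs (L s - L s') <= K * Rabs (s - s')).

Definition thp (z1 y1 : curve) (L : R -> R) (s : R) : R :=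
  dotp (z1 (L s)) (y1 s) / vnorm2 (z1 (L s)).

Lemma lift_y1 z z1 z2 S f y y1 c a b L K :
  good z z1 z2 S f -> ycond z y y1 c -> liftok z y a b L K ->
  forall s, a < s < b -> y1 s = vscale (thp z1 y1 L s) (z1 (L s)).
Proof.
  intros G Y (HK & HL & d0 & Hd0 & Hlip) s Hs.
  pose proof (lift_deriv _ _ _ _ _ _ _ _ _ _ _ _ _ G Y HK Hd0 HL Hlip s Hs) as D.
  pose proof G as (Pz & [Dzx Dzy] & _).
  pose proof Y as (Py & [Dyx Dyy] & _).
  assert (Nb : exists d, 0 < d /\ forall t, Rabs (t - s) < d -> z (L t) = y t).
  { exists (Rmin (b - s) (s - a)). split. apply Rmin_pos; lra.
    intros t Ht. apply HL. pose proof (Rmin_l (b - s) (s - a)); pose proof (Rmin_r (b - s) (s - a)).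
    apply Rabs_def2 in Ht. lra. }
  assert (E1 : fst (y1 s) = fst (z1 (L s)) * thp z1 y1 L s).
  { eapply uniqueness_limite; [apply Dyx|].
    eapply (dpl_loc (fun t => fst (z (L t)))).
    { destruct Nb as [d [Hd Hn]]. exists d. split; auto. intros t Ht. rewrite Hn; auto. }
    apply (dpl_comp (fun u => fst (z u)) L). apply D. apply Dzx. }
  assert (E2 : snd (y1 s) = snd (z1 (L s)) * thp z1 y1 L s).
  { eapply uniqueness_limite; [apply Dyy|].
    eapply (dpl_loc (fun t => snd (z (L t)))).
    { destruct Nb as [d [Hd Hn]]. exists d. split; auto. intros t Ht. rewrite Hn; auto. }
    apply (dpl_comp (fun u => snd (z u)) L). apply D. apply Dzy. }
  destruct (y1 s) as [p q]. simpl in E1, E2. unfold vscale. simpl. f_equal; lra.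
Qed.

Lemma lift_speed z z1 z2 S f y y1 c a b L K :
  good z z1 z2 S f -> ycond z y y1 c -> liftok z y a b L K ->
  forall s, a < s < b -> Rabs (thp z1 y1 L s) * vnorm (z1 (L s)) = c.
Proof.
  intros G Y HL s Hs. pose proof Y as (_ & _ & Hc & _).
  rewrite <- (Hc s). rewrite (lift_y1 _ _ _ _ _ _ _ _ _ _ _ _ G Y HL s Hs).
  rewrite vnorm_scale. reflexivity.
Qed.

Lemma lift_sign z z1 z2 S f y y1 c a b L K :
  good z z1 z2 S f -> ycond z y y1 c -> liftok z y a b L K ->
  forall s1 s2, a < s1 < b -> a < s2 < b -> 0 < thp z1 y1 L s1 -> 0 < thp z1 y1 L s2.
Proof.
  intros G Y HL. pose proof HL as (HK & HLz & d0 & Hd0 & Hlip).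
  apply (sign_const L (thp z1 y1 L) a b).
  intros s Hs. split.
  - apply (lift_deriv _ _ _ _ _ _ _ _ _ _ _ _ _ G Y HK Hd0 HLz Hlip s Hs).
  - intros E. pose proof (lift_speed _ _ _ _ _ _ _ _ _ _ _ _ G Y HL s Hs) as Hsp.
    rewrite E, Rabs_R0, Rmult_0_l in Hsp. destruct Y as (_ & _ & _ & Hc & _). lra.
Qed.

Lemma lift_sigma z z1 z2 S f y y1 c a b L K :
  good z z1 z2 S f -> ycond z y y1 c -> liftok z y a b L K -> a < b ->
  exists sg, (sg = 1 \/ sg = -1) /\
    forall s, a < s < b -> thp z1 y1 L s = sg * c / vnorm (z1 (L s)).
Proof.
  intros G Y HL Hab.
  set (m := (a + b) / 2).
  assert (Hm : a < m < b) by (unfold m; lra).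
  pose proof (vnorm2_pos_of _ _ _ _ _ (L m) G).
  assert (Hn : forall s, 0 < vnorm (z1 (L s))).
  { intros s. pose proof (vnorm2_pos_of _ _ _ _ _ (L s) G).
    unfold vnorm. apply sqrt_lt_R0; auto. }
  destruct (Rlt_dec 0 (thp z1 y1 L m)) as [P|N].
  - exists 1. split; auto. intros s Hs.
    pose proof (lift_sign _ _ _ _ _ _ _ _ _ _ _ _ G Y HL m s Hm Hs P) as Ps.
    pose proof (lift_speed _ _ _ _ _ _ _ _ _ _ _ _ G Y HL s Hs) as Sp.
    rewrite Rabs_right in Sp by lra. specialize (Hn s).
    rewrite <- Sp. field. lra.
  - exists (-1). split; auto. intros s Hs.
    assert (Ps : thp z1 y1 L s <= 0).
    { destruct (Rle_dec (thp z1 y1 L s) 0); auto.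
      pose proof (lift_sign _ _ _ _ _ _ _ _ _ _ _ _ G Y HL s m Hs Hm ltac:(lra)). lra. }
    pose proof (lift_speed _ _ _ _ _ _ _ _ _ _ _ _ G Y HL s Hs) as Sp.
    rewrite Rabs_left1 in Sp by lra. specialize (Hn s).
    rewrite <- Sp. field. lra.
Qed.

Definition Gf (u v : pt) : pt :=
  vsub (vscale (/ vnorm2 u) v) (vscale (dotp u v / (vnorm2 u * vnorm2 u)) u).
Definition y2of (c : R) (z1 z2 : curve) (t : R) : pt := vscale (c*c) (Gf (z1 t) (z2 t)).

Lemma dpl_unit (p q : R -> R) x p' q' :
  derivable_pt_lim p x p' -> derivable_pt_lim q x q' -> 0 < p x * p x + q x * q x ->
  derivable_pt_lim (fun t => p t / sqrt (p t * p t + q t * q t)) x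
    ((p' * (p x * p x + q x * q x) - p x * (p x * p' + q x * q')) /
       ((p x * p x + q x * q x) * sqrt (p x * p x + q x * q x))).
Proof.
  intros Dp Dq HQ.
  pose proof (sqrt_lt_R0 _ HQ) as Hn.
  pose proof (sqrt_sqrt _ (Rlt_le _ _ HQ)) as Hnn.
  assert (DQ : derivable_pt_lim (fun t => sqrt (p t * p t + q t * q t)) x
     (/ (2 * sqrt (p x * p x + q x * q x)) * ((p' * p x + p x * p') + (q' * q x + q x * q')))).
  { apply (dpl_sqrt (fun t => p t * p t + q t * q t)); [|auto].
    apply (dpl_plus (fun t => p t * p t) (fun t => q t * q t)); apply dpl_mult; auto. }
  assert (NZ : sqrt (p x * p x + q x * q x) <> 0) by (apply Rgt_not_eq; lra).
  pose proof (dpl_div p _ x _ _ Dp DQ NZ) as D.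
  eapply dpl_eq; [|exact D].
  set (n := sqrt (p x * p x + q x * q x)) in *.
  set (Q := p x * p x + q x * q x) in *. clearbody n. subst Q. rewrite <- Hnn. field. lra.
Qed.

Lemma lift_y1_deriv z z1 z2 S f y y1 c a b L K :
  good z z1 z2 S f -> ycond z y y1 c -> liftok z y a b L K -> a < b ->
  forall s0, a < s0 < b ->
  derivable_pt_lim (fun t => fst (y1 t)) s0 (fst (y2of c z1 z2 (L s0))) /\
  derivable_pt_lim (fun t => snd (y1 t)) s0 (snd (y2of c z1 z2 (L s0))).
Proof.
  intros G Y HL Hab s0 Hs0.
  pose proof HL as (HK & HLz & d0 & Hd0 & Hlip).
  destruct (lift_sigma _ _ _ _ _ _ _ _ _ _ _ _ G Y HL Hab) as [sg [Hsg Hth]].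
  pose proof G as (Pz & _ & [D1x D1y] & _).
  pose proof (lift_deriv _ _ _ _ _ _ _ _ _ _ _ _ _ G Y HK Hd0 HLz Hlip s0 Hs0) as DL.
  set (th := thp z1 y1 L s0) in *.
  set (px := fun t => fst (z1 (L t))). set (py := fun t => snd (z1 (L t))).
  assert (Dpx : derivable_pt_lim px s0 (fst (z2 (L s0)) * th)).
  { apply (dpl_comp (fun u => fst (z1 u)) L); auto. }
  assert (Dpy : derivable_pt_lim py s0 (snd (z2 (L s0)) * th)).
  { apply (dpl_comp (fun u => snd (z1 u)) L); auto. }
  pose proof (vnorm2_pos_of _ _ _ _ _ (L s0) G) as HQ. unfold vnorm2 in HQ.
  assert (Nb : exists d, 0 < d /\ forall t, Rabs (t - s0) < d -> a < t < b).
  { exists (Rmin (b - s0) (s0 - a)). split. apply Rmin_pos; lra.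
    intros t Ht. pose proof (Rmin_l (b - s0) (s0 - a)); pose proof (Rmin_r (b - s0) (s0 - a)).
    apply Rabs_def2 in Ht. lra. }
  destruct Nb as [d [Hd Hnb]].
  assert (Ey : forall t, a < t < b -> y1 t = vscale (sg * c / vnorm (z1 (L t))) (z1 (L t))).
  { intros t Ht. rewrite (lift_y1 _ _ _ _ _ _ _ _ _ _ _ _ G Y HL t Ht). rewrite Hth; auto. }
  assert (Hth0 : th = sg * c / sqrt (px s0 * px s0 + py s0 * py s0)).
  { unfold th. rewrite Hth; auto. }
  pose proof (sqrt_lt_R0 _ HQ) as Hn.
  pose proof (sqrt_sqrt _ (Rlt_le _ _ HQ)) as Hnn.
  assert (Hsg2 : sg * sg = 1) by (destruct Hsg; subst; ring).
  split.
  - eapply (dpl_loc (fun t => sg * c * (px t / sqrt (px t * px t + py t * py t)))).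
    { exists d. split; auto. intros t Ht. rewrite (Ey t (Hnb t Ht)). unfold vscale, vnorm, vnorm2; simpl.
      unfold px, py. field. apply Rgt_not_eq, sqrt_lt_R0. apply (vnorm2_pos_of _ _ _ _ _ (L t) G). }
    eapply dpl_eq; [|apply dpl_mult; [apply dpl_const|apply dpl_unit; eauto]].
    unfold y2of, Gf, vscale, vsub, dotp, vnorm2; simpl.
    rewrite Hth0. unfold px, py.
    replace (c * c) with ((sg * c) * (sg * c)) by (transitivity (sg * sg * (c * c)); [ring|rewrite Hsg2; ring]).
    set (u1 := fst (z1 (L s0))) in *. set (u2 := snd (z1 (L s0))) in *.
    set (v1 := fst (z2 (L s0))). set (v2 := snd (z2 (L s0))).
    set (n := sqrt (u1 * u1 + u2 * u2)) in *. clearbody n.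
    rewrite <- Hnn. field. lra.
  - eapply (dpl_loc (fun t => sg * c * (py t / sqrt (py t * py t + px t * px t)))).
    { exists d. split; auto. intros t Ht. rewrite (Ey t (Hnb t Ht)). unfold vscale, vnorm, vnorm2; simpl.
      unfold px, py. rewrite (Rplus_comm (snd _ * _)). field.
      apply Rgt_not_eq, sqrt_lt_R0. apply (vnorm2_pos_of _ _ _ _ _ (L t) G). }
    eapply dpl_eq; [|apply dpl_mult; [apply dpl_const|apply dpl_unit; eauto]].
    2: { unfold px, py; lra. }
    unfold y2of, Gf, vscale, vsub, dotp, vnorm2; simpl.
    rewrite Hth0. unfold px, py.
    replace (c * c) with ((sg * c) * (sg * c)) by (transitivity (sg * sg * (c * c)); [ring|rewrite Hsg2; ring]).
    set (u1 := fst (z1 (L s0))) in *. set (u2 := snd (z1 (L s0))) in *.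
    set (v1 := fst (z2 (L s0))). set (v2 := snd (z2 (L s0))).
    rewrite (Rplus_comm (u2 * u2)).
    set (n := sqrt (u1 * u1 + u2 * u2)) in *. clearbody n.
    rewrite <- Hnn. field. lra.
Qed.

Definition pre (z : curve) (p : pt) : R := epsilon (inhabits 0) (fun t => z t = p).

Lemma pre_spec z p : on_curve z p -> z (pre z p) = p.
Proof. intros H. unfold pre. apply (epsilon_spec (inhabits 0) (fun t => z t = p)). exact H. Qed.

Definition rep (z : curve) (p : pt) (r : R) : R :=
  pre z p + 2 * PI * IZR (up ((r - pre z p) / (2 * PI) + / 2) - 1).

Lemma rep_spec z p r : periodic z -> on_curve z p -> z (rep z p r) = p /\ Rabs (rep z p r - r) <= PI.
Proof.
  intros Pz H. split.
  - unfold rep. rewrite periodic_Z; auto. apply pre_spec; auto.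
  - unfold rep. pose proof PI_RGT_0.
    set (x := (r - pre z p) / (2 * PI)).
    destruct (archimed (x + /2)) as [H1 H2]. rewrite minus_IZR.
    set (k := IZR (up (x + /2))) in *.
    assert (E : r - pre z p = 2 * PI * x) by (unfold x; field; lra).
    apply Rabs_le. nra.
Qed.

Lemma close z z1 z2 S f a b : good z z1 z2 S f ->
  Rabs (a - b) + f * vdist (z a) (z b) < 2 * PI -> Rabs (a - b) <= f * vdist (z a) (z b).
Proof.
  intros G H. destruct (circ_bound _ _ _ _ _ G a b) as [k [H1 H2]].
  assert (k = 0%Z).
  { apply IZR_small_0. pose proof PI_RGT_0.
    pose proof (Rabs_triang (a - b) (- (a - b - 2 * PI * IZR k))). rewrite Rabs_Ropp in H3.
    replace (a - b + - (a - b - 2 * PI * IZR k)) with (2 * PI * IZR k) in H3 by ring.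
    rewrite Rabs_mult, (Rabs_right (2 * PI)) in H3 by lra.
    assert (Rabs (IZR k) < 1) by nra. apply Rabs_def2 in H4. lra. }
  subst k. replace (a - b - 2 * PI * IZR 0) with (a - b) in H2 by (simpl; ring). auto.
Qed.

Definition hwin (f c : R) := PI / (8 * f * c).

Lemma local_lift z z1 z2 S f y y1 c t0 : good z z1 z2 S f -> ycond z y y1 c ->
  liftok z y (t0 - hwin f c) (t0 + hwin f c) (fun s => rep z (y s) (pre z (y t0))) (2 * f * c).
Proof.
  intros G Y. pose proof G as (Pz & _ & _ & _ & _ & Hf & _).
  pose proof Y as (Py & _ & _ & Hc & Hon).
  pose proof PI_RGT_0.
  assert (Hh : 2 * f * c * hwin f c = PI / 4) by (unfold hwin; field; lra).
  assert (Hh0 : 0 < hwin f c) by (unfold hwin; apply Rdiv_lt_0_compat; nra).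
  set (th0 := pre z (y t0)).
  assert (E0 : z th0 = y t0) by (apply pre_spec; auto).
  assert (Hnear : forall s, t0 - hwin f c < s < t0 + hwin f c ->
     Rabs (rep z (y s) th0 - th0) <= PI / 4).
  { intros s Hs. destruct (rep_spec z (y s) th0 Pz (Hon s)) as [E1 E2].
    pose proof (y_lip z y y1 c Y s t0) as Hl.
    assert (Rabs (s - t0) < hwin f c) by (apply Rabs_def1; lra).
    assert (f * vdist (y s) (y t0) <= PI / 4).
    { eapply Rle_trans. apply Rmult_le_compat_l; [lra|apply Hl]. nra. }
    pose proof (close z z1 z2 S f (rep z (y s) th0) th0 G) as Cl. rewrite E1, E0 in Cl.
    eapply Rle_trans; [apply Cl|]; lra. }
  split; [nra|split].
  - intros s Hs. apply rep_spec; auto.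
  - exists 1. split; [lra|]. intros s s' Hs Hs' _.
    destruct (rep_spec z (y s) th0 Pz (Hon s)) as [E1 _].
    destruct (rep_spec z (y s') th0 Pz (Hon s')) as [E1' _].
    pose proof (Hnear s Hs); pose proof (Hnear s' Hs').
    pose proof (y_lip z y y1 c Y s s') as Hl.
    assert (Rabs (s - s') < 2 * hwin f c) by (apply Rabs_def1; lra).
    assert (f * vdist (y s) (y s') <= PI / 2).
    { eapply Rle_trans. apply Rmult_le_compat_l; [lra|apply Hl]. nra. }
    pose proof (close z z1 z2 S f (rep z (y s) th0) (rep z (y s') th0) G) as Cl.
    rewrite E1, E1' in Cl.
    assert (Rabs (rep z (y s) th0 - rep z (y s') th0) <= PI / 2).
    { replace (rep z (y s) th0 - rep z (y s') th0) with
        ((rep z (y s) th0 - th0) - (rep z (y s') th0 - th0)) by ring.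
      eapply Rle_trans; [apply Rabs_triang|]. rewrite Rabs_Ropp. lra. }
    eapply Rle_trans; [apply Cl; lra|].
    replace (2 * f * c * Rabs (s - s')) with (f * (2 * c * Rabs (s - s'))) by ring.
    apply Rmult_le_compat_l; [lra|auto].
Qed.

Definition y2fun (c : R) (z z1 z2 : curve) (y : curve) (t : R) : pt := y2of c z1 z2 (pre z (y t)).

Lemma Dc_y1 z z1 z2 S f y y1 c : good z z1 z2 S f -> ycond z y y1 c ->
  Dc y1 (y2fun c z z1 z2 y).
Proof.
  intros G Y. pose proof G as (Pz & _ & _ & _ & _ & Hf & _).
  pose proof Y as (Py & _ & _ & Hc & Hon).
  assert (Hh0 : 0 < hwin f c) by (unfold hwin; apply Rdiv_lt_0_compat; pose proof PI_RGT_0; nra).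
  assert (Key : forall t0, y2of c z1 z2 (rep z (y t0) (pre z (y t0))) = y2fun c z z1 z2 y t0).
  { intros t0. unfold y2fun, y2of.
    destruct (rep_spec z (y t0) (pre z (y t0)) Pz (Hon t0)) as [E1 _].
    assert (E2 : z (rep z (y t0) (pre z (y t0))) = z (pre z (y t0))) by (rewrite E1, pre_spec; auto).
    destruct (same_point _ _ _ _ _ _ _ G E2) as [F1 F2]. rewrite F1, F2. reflexivity. }
  split; intros t0;
  destruct (lift_y1_deriv _ _ _ _ _ _ _ _ _ _ _ _ G Y (local_lift z z1 z2 S f y y1 c t0 G Y)
     ltac:(lra) t0 ltac:(lra)) as [D1 D2]; rewrite Key in D1, D2; auto.
Qed.

Lemma hwin_facts f c : 1 <= f -> 0 < c -> 0 < hwin f c /\ 2 * f * c * hwin f c = PI / 4.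
Proof.
  intros. pose proof PI_RGT_0. unfold hwin. split.
  apply Rdiv_lt_0_compat; nra. field. lra.
Qed.

Lemma fy_small z y y1 c f s s' : ycond z y y1 c -> 1 <= f -> Rabs (s - s') <= hwin f c ->
  f * vdist (y s) (y s') <= PI / 4.
Proof.
  intros Y Hf H. pose proof Y as (_ & _ & _ & Hc & _).
  destruct (hwin_facts f c Hf Hc) as [H0 H1].
  pose proof (y_lip z y y1 c Y s s').
  assert (2*f*c*Rabs(s-s') <= 2*f*c*hwin f c) by (apply Rmult_le_compat_l; nra).
  eapply Rle_trans. apply Rmult_le_compat_l; [lra|eauto]. nra.
Qed.

Lemma global_lift_n z z1 z2 S f y y1 c A0 : good z z1 z2 S f -> ycond z y y1 c ->
  forall n : nat, exists th : R -> R,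
    (forall s, A0 <= s <= A0 + INR n * hwin f c -> z (th s) = y s) /\
    (forall s s', A0 <= s <= A0 + INR n * hwin f c -> A0 <= s' <= A0 + INR n * hwin f c ->
       Rabs (s - s') <= hwin f c -> Rabs (th s - th s') <= f * vdist (y s) (y s')).
Proof.
  intros G Y. pose proof G as (Pz & _ & _ & _ & _ & Hf & _).
  pose proof Y as (Py & _ & _ & Hc & Hon).
  destruct (hwin_facts f c Hf Hc) as [Hh0 Hh1]. set (h := hwin f c) in *.
  pose proof PI_RGT_0.
  induction n as [|n IH].
  - exists (fun _ => pre z (y A0)). simpl. split.
    + intros s Hs. replace s with A0 by lra. apply pre_spec; auto.
    + intros s s' Hs Hs' _. replace (pre z (y A0) - pre z (y A0)) with 0 by ring.
      rewrite Rabs_R0. apply Rmult_le_pos; [lra|apply vdist_nonneg].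
  - destruct IH as [th [H1 H2]].
    set (sn := A0 + INR n * h).
    assert (Hsn : 0 <= INR n * h) by (apply Rmult_le_pos; [apply pos_INR|lra]).
    rewrite S_INR. replace (A0 + (INR n + 1) * h) with (sn + h) by (unfold sn; ring).
    exists (fun s => if Rle_dec s sn then th s else rep z (y s) (th sn)).
    assert (Esn : z (th sn) = y sn) by (apply H1; unfold sn; lra).
    assert (Hnew : forall s, sn < s <= sn + h -> z (rep z (y s) (th sn)) = y s /\
                     Rabs (rep z (y s) (th sn) - th sn) <= PI / 4).
    { intros s Hs. destruct (rep_spec z (y s) (th sn) Pz (Hon s)) as [E1 E2]. split; auto.
      pose proof (close z z1 z2 S f (rep z (y s) (th sn)) (th sn) G) as Cl. rewrite E1, Esn in Cl.
      assert (f * vdist (y s) (y sn) <= PI / 4).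
      { apply (fy_small z y y1 c f); auto. apply Rabs_le. unfold h in *; lra. }
      eapply Rle_trans; [apply Cl|]; lra. }
    split.
    + intros s Hs. destruct (Rle_dec s sn). apply H1; unfold sn in *; lra. apply Hnew; lra.
    + intros s s' Hs Hs' Hss.
      assert (Fss : f * vdist (y s) (y s') <= PI / 4) by (apply (fy_small z y y1 c f); auto).
      assert (Gen : forall a b, z a = y s -> z b = y s' -> Rabs (a - b) <= 3 * PI / 2 ->
                 Rabs (a - b) <= f * vdist (y s) (y s')).
      { intros a b Ea Eb Hab. pose proof (close z z1 z2 S f a b G) as Cl. rewrite Ea, Eb in Cl.
        apply Cl. lra. }
      destruct (Rle_dec s sn) as [Ls|Ls]; destruct (Rle_dec s' sn) as [Ls'|Ls'].
      * apply H2; unfold sn in *; auto; lra.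
      * destruct (Hnew s' ltac:(lra)) as [E' N'].
        assert (Rabs (s - sn) <= h) by (apply Rabs_le; apply Rabs_le_inv in Hss; lra).
        pose proof (H2 s sn ltac:(unfold sn in *; lra) ltac:(unfold sn in *; lra) H0).
        assert (f * vdist (y s) (y sn) <= PI / 4) by (apply (fy_small z y y1 c f); auto).
        apply Gen. apply H1; unfold sn in *; lra. auto.
        replace (th s - rep z (y s') (th sn)) with ((th s - th sn) - (rep z (y s') (th sn) - th sn)) by ring.
        eapply Rle_trans; [apply Rabs_triang|]. rewrite Rabs_Ropp. lra.
      * destruct (Hnew s ltac:(lra)) as [E N].
        assert (Rabs (s' - sn) <= h) by (apply Rabs_le; apply Rabs_le_inv in Hss; lra).
        pose proof (H2 s' sn ltac:(unfold sn in *; lra) ltac:(unfold sn in *; lra) H0).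
        assert (f * vdist (y s') (y sn) <= PI / 4) by (apply (fy_small z y y1 c f); auto).
        apply Gen. auto. apply H1; unfold sn in *; lra.
        replace (rep z (y s) (th sn) - th s') with ((rep z (y s) (th sn) - th sn) - (th s' - th sn)) by ring.
        eapply Rle_trans; [apply Rabs_triang|]. rewrite Rabs_Ropp. lra.
      * destruct (Hnew s ltac:(lra)) as [E N]. destruct (Hnew s' ltac:(lra)) as [E' N'].
        apply Gen; auto.
        replace (rep z (y s) (th sn) - rep z (y s') (th sn)) with
          ((rep z (y s) (th sn) - th sn) - (rep z (y s') (th sn) - th sn)) by ring.
        eapply Rle_trans; [apply Rabs_triang|]. rewrite Rabs_Ropp. lra.
Qed.

Lemma global_lift z z1 z2 S f y y1 c : good z z1 z2 S f -> ycond z y y1 c ->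
  exists th : R -> R, liftok z y (- PI - 1) (PI + 1) th (2 * f * c).
Proof.
  intros G Y. pose proof G as (Pz & _ & _ & _ & _ & Hf & _).
  pose proof Y as (Py & _ & _ & Hc & Hon).
  destruct (hwin_facts f c Hf Hc) as [Hh0 Hh1].
  pose proof PI_RGT_0.
  destruct (archimed ((2 * PI + 2) / hwin f c)) as [Ha _].
  assert (Hup : (0 <= up ((2 * PI + 2) / hwin f c))%Z).
  { apply le_IZR. assert (0 < (2 * PI + 2) / hwin f c) by (apply Rdiv_lt_0_compat; lra). simpl; lra. }
  destruct (global_lift_n z z1 z2 S f y y1 c (- PI - 1) G Y (Z.to_nat (up ((2 * PI + 2) / hwin f c))))
    as [th [H1 H2]].
  rewrite INR_IZR_INZ, Z2Nat.id in H1, H2 by auto.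
  set (n := IZR (up ((2 * PI + 2) / hwin f c))) in *.
  assert (Hn : PI + 1 <= - PI - 1 + n * hwin f c).
  { apply (Rmult_lt_compat_r (hwin f c)) in Ha; auto. unfold Rdiv in Ha.
    rewrite Rmult_assoc, Rinv_l, Rmult_1_r in Ha by lra. lra. }
  exists th. split; [nra|split].
  - intros s Hs. apply H1. lra.
  - exists (hwin f c). split; auto. intros s s' Hs Hs' Hss.
    eapply Rle_trans. apply H2; lra.
    replace (2 * f * c * Rabs (s - s')) with (f * (2 * c * Rabs (s - s'))) by ring.
    apply Rmult_le_compat_l; [lra|]. apply (y_lip z y y1 c Y).
Qed.

Definition yinj (y : curve) : Prop :=
  forall s t, - PI <= s < PI -> - PI <= t < PI -> y s = y t -> s = t.

Lemma th_deriv z z1 z2 S f y y1 c th : good z z1 z2 S f -> ycond z y y1 c ->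
  liftok z y (- PI - 1) (PI + 1) th (2 * f * c) ->
  forall s, - PI - 1 < s < PI + 1 -> derivable_pt_lim th s (thp z1 y1 th s).
Proof.
  intros G Y (HK & HL & d0 & Hd0 & Hlip) s Hs.
  apply (lift_deriv _ _ _ _ _ _ _ _ _ _ _ _ _ G Y HK Hd0 HL Hlip s Hs).
Qed.

Lemma th_mvt z z1 z2 S f y y1 c th : good z z1 z2 S f -> ycond z y y1 c ->
  liftok z y (- PI - 1) (PI + 1) th (2 * f * c) ->
  forall s s', - PI <= s -> s < s' -> s' <= PI ->
  exists xi, s < xi < s' /\ th s' - th s = thp z1 y1 th xi * (s' - s).
Proof.
  intros G Y HL s s' H1 H2 H3. pose proof PI_RGT_0.
  destruct (MVT_cor2 th (thp z1 y1 th) s s' H2) as [xi [E Hxi]].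
  { intros t Ht. apply (th_deriv _ _ _ _ _ _ _ _ _ G Y HL). lra. }
  exists xi. split; auto.
Qed.

Lemma degree z z1 z2 S f y y1 c th : good z z1 z2 S f -> ycond z y y1 c -> yinj y ->
  liftok z y (- PI - 1) (PI + 1) th (2 * f * c) ->
  exists sg, (sg = 1 \/ sg = -1) /\
    (forall s, - PI - 1 < s < PI + 1 -> thp z1 y1 th s = sg * c / vnorm (z1 (th s))) /\
    sg * (th PI - th (- PI)) = 2 * PI /\ / f <= c /\ c <= 4 * PI * qS S.
Proof.
  intros G Y Hinj HL. pose proof PI_RGT_0.
  pose proof G as (Pz & _ & _ & _ & _ & Hf & _).
  pose proof Y as (Py & _ & _ & Hc & Hon).
  pose proof HL as (HK & HLz & _).
  destruct (lift_sigma _ _ _ _ _ _ _ _ _ _ _ _ G Y HL ltac:(lra)) as [sg [Hsg Hth]].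
  exists sg. split; auto. split; auto.
  assert (Hn : forall s, 0 < vnorm (z1 s)).
  { intros s. unfold vnorm. apply sqrt_lt_R0. apply (vnorm2_pos_of _ _ _ _ _ s G). }
  assert (Ep : z (th PI) = z (th (- PI))).
  { rewrite !HLz by lra. replace PI with (- PI + 2 * PI) at 1 by ring. apply Py. }
  destruct (same_point_k _ _ _ _ _ _ _ G Ep) as [k Hk].
  destruct (th_mvt _ _ _ _ _ _ _ _ _ G Y HL (- PI) PI ltac:(lra) ltac:(lra) ltac:(lra)) as [xi [Hxi Exi]].
  rewrite Hth in Exi by lra.
  set (nx := vnorm (z1 (th xi))) in *.
  assert (Hnx : 0 < nx) by apply Hn.
  assert (Ek : sg * c / nx = IZR k).
  { apply (Rmult_eq_reg_r (2 * PI)); [|lra]. replace (PI - - PI) with (2 * PI) in Exi by ring. lra. }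
  assert (Hcont : forall a, - PI <= a <= PI -> continuity_pt th a).
  { intros a Ha. apply derivable_continuous_pt. exists (thp z1 y1 th a).
    apply (th_deriv _ _ _ _ _ _ _ _ _ G Y HL). lra. }
  assert (Hk1 : IZR k = sg).
  { assert (Hkn0 : sg * IZR k > 0).
    { rewrite <- Ek. assert (Hcn : 0 < c / nx) by (apply Rdiv_lt_0_compat; lra).
      replace (sg * (sg * c / nx)) with ((sg * sg) * (c / nx)) by (field; lra).
      destruct Hsg; subst sg; lra. }
    assert (Hk2 : sg * IZR k < 2).
    { destruct (Rlt_dec (sg * IZR k) 2) as [|Hge]; auto. exfalso.
      assert (Hge' : 2 <= sg * IZR k) by lra.
      (* find s with th s = th(-PI) + 2 PI sg *)
      set (g := fun s => sg * (th s - th (- PI)) - 2 * PI).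
      assert (Hg1 : g (- PI) < 0) by (unfold g; lra).
      assert (Hg2 : 0 < g PI).
      { unfold g. rewrite Hk. replace (sg * (th (- PI) + 2 * PI * IZR k - th (- PI))) with (2 * PI * (sg * IZR k)) by ring.
        nra. }
      destruct (Ranalysis5.IVT_interv g (- PI) PI) as [s [Hs Hgs]]; auto; try lra.
      { intros a Ha. unfold g. apply (continuity_pt_minus (fun s => sg * (th s - th (- PI))) (fun _ => 2 * PI)).
        apply (continuity_pt_scal (fun s => th s - th (- PI))).
        apply (continuity_pt_minus th (fun _ => th (- PI))). auto. apply continuity_pt_const; intros ? ?; auto.
        apply continuity_pt_const; intros ? ?; auto. }
      assert (Es : th s = th (- PI) + 2 * PI * IZR (if Req_EM_T sg 1 then 1 else -1)).
      { unfold g in Hgs. destruct (Req_EM_T sg 1) as [E|NE].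
        - subst sg. simpl. lra.
        - destruct Hsg as [|E]; [contradiction|subst sg]. simpl. lra. }
      assert (Ys : y s = y (- PI)).
      { rewrite <- !HLz by lra. rewrite Es. apply periodic_Z; auto. }
      assert (s <> PI).
      { intros E. subst s. unfold g in Hgs. rewrite Hk in Hgs.
        replace (sg * (th (- PI) + 2 * PI * IZR k - th (- PI)) - 2 * PI) with (2 * PI * (sg * IZR k - 1)) in Hgs by ring.
        apply Rmult_integral in Hgs. destruct Hgs; lra. }
      assert (s = - PI) by (apply Hinj; auto; lra).
      subst s. lra. }
    assert (Hint : (sg * IZR k = 1)).
    { destruct Hsg; subst sg.
      - rewrite Rmult_1_l in *. assert (0 < k)%Z by (apply lt_IZR; lra). assert (k < 2)%Z by (apply lt_IZR; lra).
        assert (k = 1%Z) by lia. subst k. simpl. ring.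
      - assert (IZR k < 0) by lra. assert (-2 < IZR k) by lra.
        assert (k < 0)%Z by (apply lt_IZR; lra). assert (-2 < k)%Z by (apply lt_IZR; lra).
        assert (k = (-1)%Z) by lia. subst k. simpl. ring. }
    destruct Hsg; subst sg; lra. }
  rewrite Hk1 in Ek.
  assert (Ec : c = nx).
  { destruct Hsg; subst sg.
    - apply (Rmult_eq_reg_r (/ nx)). unfold Rdiv in Ek. rewrite Rinv_r by lra. lra.
      apply Rinv_neq_0_compat; lra.
    - apply (Rmult_eq_reg_r (/ nx)). unfold Rdiv in Ek. rewrite Rinv_r by lra. lra.
      apply Rinv_neq_0_compat; lra. }
  split; [|split].
  - rewrite Hk. destruct Hsg; subst sg; rewrite Hk1; lra.
  - rewrite Ec. apply (speed_lower _ _ _ _ _ G).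
  - rewrite Ec. apply (z1_bound _ _ _ _ _ G).
Qed.

Lemma circ_lower x D (k : Z) : 0 <= D <= 2 * PI -> (x = D \/ x = - D) ->
  Rmin D (2 * PI - D) <= Rabs (x - 2 * PI * IZR k).
Proof.
  intros HD Hx. pose proof PI_RGT_0.
  pose proof (Rmin_l D (2 * PI - D)); pose proof (Rmin_r D (2 * PI - D)).
  assert (Hk : (k <= 0)%Z \/ (1 <= k)%Z) by lia.
  assert (Hk' : (k <= -1)%Z \/ (0 <= k)%Z) by lia.
  destruct Hx as [E|E]; subst x.
  - destruct Hk as [K|K]; apply IZR_le in K.
    + rewrite Rabs_right by nra. nra.
    + rewrite Rabs_left1 by nra. nra.
  - destruct Hk' as [K|K]; apply IZR_le in K.
    + rewrite Rabs_right by nra. nra.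
    + rewrite Rabs_left1 by nra. nra.
Qed.

Definition M1 (S : R) := 4 * PI * qS S.

Lemma M1_pos z z1 z2 S f : good z z1 z2 S f -> 0 < M1 S.
Proof.
  intros G. pose proof (z1_bound _ _ _ _ _ G 0) as B. pose proof (vnorm2_pos_of _ _ _ _ _ 0 G) as P.
  rewrite <- vnorm_sq in P. pose proof (vnorm_nonneg (z1 0)). unfold M1. nra.
Qed.

Lemma mono z z1 z2 S f y y1 c th sg : good z z1 z2 S f -> ycond z y y1 c ->
  liftok z y (- PI - 1) (PI + 1) th (2 * f * c) ->
  (sg = 1 \/ sg = -1) ->
  (forall s, - PI - 1 < s < PI + 1 -> thp z1 y1 th s = sg * c / vnorm (z1 (th s))) ->
  forall s s', - PI <= s -> s <= s' -> s' <= PI ->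
  c / M1 S * (s' - s) <= sg * (th s' - th s) /\ sg * (th s' - th s) <= c * f * (s' - s).
Proof.
  intros G Y HL Hsg Hth s s' H1 H2 H3.
  pose proof Y as (_ & _ & _ & Hc & _). pose proof G as (_ & _ & _ & _ & _ & Hf & _).
  destruct (Req_dec s s') as [E|NE].
  { subst. replace (s' - s') with 0 by ring. replace (th s' - th s') with 0 by ring. lra. }
  destruct (th_mvt _ _ _ _ _ _ _ _ _ G Y HL s s' H1 ltac:(lra) H3) as [xi [Hxi E]].
  rewrite E, Hth by (pose proof PI_RGT_0; lra).
  set (n := vnorm (z1 (th xi))).
  assert (Hn1 : / f <= n) by apply (speed_lower _ _ _ _ _ G).
  assert (Hn2 : n <= M1 S) by apply (z1_bound _ _ _ _ _ G).
  assert (Hfpos : 0 < / f) by (apply Rinv_0_lt_compat; lra).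
  assert (Hn0 : 0 < n) by lra.
  replace (sg * (sg * c / n * (s' - s))) with ((sg * sg) * (c / n) * (s' - s)) by (field; lra).
  replace (sg * sg) with 1 by (destruct Hsg; subst; ring). rewrite Rmult_1_l.
  split.
  - apply Rmult_le_compat_r; [lra|]. unfold Rdiv. apply Rmult_le_compat_l; [lra|].
    apply Rinv_le_contravar; lra.
  - apply Rmult_le_compat_r; [lra|]. unfold Rdiv. apply Rmult_le_compat_l; [lra|].
    rewrite <- (Rinv_inv f). apply Rinv_le_contravar; lra.
Qed.

Lemma sep_lohi z z1 z2 S f y y1 c th sg : good z z1 z2 S f -> ycond z y y1 c ->
  liftok z y (- PI - 1) (PI + 1) th (2 * f * c) ->
  (sg = 1 \/ sg = -1) ->
  (forall s, - PI - 1 < s < PI + 1 -> thp z1 y1 th s = sg * c / vnorm (z1 (th s))) ->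
  sg * (th PI - th (- PI)) = 2 * PI ->
  forall lo hi, - PI <= lo -> lo <= hi -> hi <= PI ->
  c / M1 S * Rmin (hi - lo) (2 * PI - (hi - lo)) <= f * vdist (y hi) (y lo).
Proof.
  intros G Y HL Hsg Hth Hdeg lo hi H1 H2 H3. pose proof PI_RGT_0.
  pose proof HL as (_ & HLz & _).
  pose proof Y as (_ & _ & _ & Hc & _).
  assert (HM : 0 < M1 S).
  { apply (M1_pos _ _ _ _ _ G). }
  assert (Hcm : 0 < c / M1 S) by (apply Rdiv_lt_0_compat; lra).
  destruct (mono _ _ _ _ _ _ _ _ _ _ G Y HL Hsg Hth lo hi H1 H2 H3) as [A1 _].
  destruct (mono _ _ _ _ _ _ _ _ _ _ G Y HL Hsg Hth hi PI ltac:(lra) H3 ltac:(lra)) as [A2 _].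
  destruct (mono _ _ _ _ _ _ _ _ _ _ G Y HL Hsg Hth (- PI) lo ltac:(lra) H1 ltac:(lra)) as [A3 _].
  set (D := sg * (th hi - th lo)).
  assert (HD' : c / M1 S * (2 * PI - (hi - lo)) <= 2 * PI - D).
  { unfold D. rewrite <- Hdeg. nra. }
  destruct (circ_bound _ _ _ _ _ G (th hi) (th lo)) as [k [_ Hk]].
  rewrite !HLz in Hk by lra.
  assert (0 <= c / M1 S * (hi - lo)) by (apply Rmult_le_pos; lra).
  assert (0 <= c / M1 S * (2 * PI - (hi - lo))) by (apply Rmult_le_pos; lra).
  assert (HD : 0 <= D <= 2 * PI) by (unfold D in *; lra).
  pose proof (circ_lower (th hi - th lo) D k HD) as CL.
  assert (Hx : th hi - th lo = D \/ th hi - th lo = - D).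
  { unfold D. destruct Hsg; subst sg; [left|right]; ring. }
  specialize (CL Hx).
  eapply Rle_trans; [|apply Hk]. eapply Rle_trans; [|apply CL].
  apply Rmin_glb.
  - eapply Rle_trans; [|apply A1]. apply Rmult_le_compat_l; [lra|apply Rmin_l].
  - eapply Rle_trans; [|apply HD']. apply Rmult_le_compat_l; [lra|apply Rmin_r].
Qed.

Lemma Fy_sep z z1 z2 S f y y1 c th sg : good z z1 z2 S f -> ycond z y y1 c ->
  liftok z y (- PI - 1) (PI + 1) th (2 * f * c) ->
  (sg = 1 \/ sg = -1) ->
  (forall s, - PI - 1 < s < PI + 1 -> thp z1 y1 th s = sg * c / vnorm (z1 (th s))) ->
  sg * (th PI - th (- PI)) = 2 * PI ->
  forall xi eta, inT xi -> inT eta ->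
  c / M1 S * Rabs eta <= f * vdist (y xi) (y (xi - eta)).
Proof.
  intros G Y HL Hsg Hth Hdeg xi eta Hxi Heta. pose proof PI_RGT_0.
  pose proof Y as (Py & _ & _ & Hc & _).
  unfold inT in *.
  assert (HM : 0 < M1 S).
  { apply (M1_pos _ _ _ _ _ G). }
  assert (Hcm : 0 < c / M1 S) by (apply Rdiv_lt_0_compat; lra).
  assert (Gen : forall s1 s2, - PI <= s1 <= PI -> - PI <= s2 <= PI ->
     Rabs eta <= Rmin (Rabs (s1 - s2)) (2 * PI - Rabs (s1 - s2)) ->
     c / M1 S * Rabs eta <= f * vdist (y s1) (y s2)).
  { intros s1 s2 Hs1 Hs2 Hm.
    destruct (Rle_dec s2 s1) as [Le|Lt].
    - pose proof (sep_lohi _ _ _ _ _ _ _ _ _ _ G Y HL Hsg Hth Hdeg s2 s1 ltac:(lra) Le ltac:(lra)).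
      rewrite (Rabs_right (s1 - s2)) in Hm by lra.
      eapply Rle_trans; [|apply H0]. apply Rmult_le_compat_l; lra.
    - pose proof (sep_lohi _ _ _ _ _ _ _ _ _ _ G Y HL Hsg Hth Hdeg s1 s2 ltac:(lra) ltac:(lra) ltac:(lra)).
      rewrite (Rabs_left (s1 - s2)) in Hm by lra. rewrite vdist_sym.
      eapply Rle_trans; [|apply H0]. apply Rmult_le_compat_l; [lra|].
      replace (s2 - s1) with (- (s1 - s2)) by ring. auto. }
  destruct (Rle_dec (- PI) (xi - eta)) as [Lo|Lo]; [destruct (Rle_dec (xi - eta) PI) as [Hi|Hi]|].
  - apply Gen; try lra. replace (xi - (xi - eta)) with eta by ring.
    assert (Rabs eta <= PI) by (apply Rabs_le; lra). apply Rmin_glb; lra.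
  -
    replace (y (xi - eta)) with (y (xi - eta - 2 * PI)).
    2: { replace (xi - eta) with (xi - eta - 2 * PI + 2 * PI) at 2 by ring. rewrite Py. auto. }
    apply Gen; try lra.
    replace (xi - (xi - eta - 2 * PI)) with (eta + 2 * PI) by ring.
    rewrite (Rabs_left eta) by lra. rewrite Rabs_right by lra. apply Rmin_glb; lra.
  - replace (y (xi - eta)) with (y (xi - eta + 2 * PI)) by (apply Py).
    apply Gen; try lra.
    replace (xi - (xi - eta + 2 * PI)) with (eta - 2 * PI) by ring.
    rewrite (Rabs_right eta) by lra. rewrite Rabs_left by lra. apply Rmin_glb; lra.
Qed.

Fixpoint psum (F : R -> R -> R) (a : R) (l : list R) : R :=
  match l with nil => 0 | b :: l' => F a b + psum F b l' end.

Definition rterm (g : curve) (x x' : R) : R := vnorm2 (vsub (g x') (g x)) / (x' - x).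

Lemma rsum_psum g a l : rsum g a l = psum (rterm g) a l.
Proof. revert a; induction l as [|b l IH]; intros a; simpl; auto. rewrite IH. reflexivity. Qed.

Lemma psum_app1 F a l b : psum F a (l ++ b :: nil) = psum F a l + F (last l a) b.
Proof.
  revert a; induction l as [|x l IH]; intros a.
  - simpl. ring.
  - rewrite last_cons_gen. change ((x :: l) ++ b :: nil) with (x :: (l ++ b :: nil)).
    simpl psum. rewrite IH. ring.
Qed.

Lemma psum_ext F F' a l : (forall x x', F x x' = F' x x') -> psum F a l = psum F' a l.
Proof. intros E; revert a; induction l as [|b l IH]; intros a; simpl; auto. rewrite E, IH; auto. Qed.

Lemma psum_le F F' lo hi a l : (forall x x', lo <= x -> x < x' -> x' <= hi -> F x x' <= F' x x') ->
  lo <= a -> incr_from a l -> last l a <= hi -> psum F a l <= psum F' a l.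
Proof.
  intros H; revert a; induction l as [|b l IH]; intros a Ha Hl Hlast; simpl; [lra|].
  destruct Hl as [Hab Hl]. rewrite last_cons_gen in Hlast.
  pose proof (incr_from_last b l Hl).
  apply Rplus_le_compat. apply H; lra. apply IH; auto. lra.
Qed.

Lemma psum_lin F F' al be a l :
  psum (fun x x' => al * F x x' + be * F' x x') a l = al * psum F a l + be * psum F' a l.
Proof. revert a; induction l as [|b l IH]; intros a; simpl; [ring|]. rewrite IH. ring. Qed.

Lemma psum_tele (h : R -> R) a l : psum (fun x x' => h x' - h x) a l = h (last l a) - h a.
Proof.
  revert a; induction l as [|b l IH]; intros a; [simpl; ring|].
  cbn [psum]. rewrite IH, last_cons_gen. ring.
Qed.

Lemma psum_map F (th : R -> R) a l :
  psum F (th a) (map th l) = psum (fun x x' => F (th x) (th x')) a l.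
Proof. revert a; induction l as [|b l IH]; intros a; simpl; auto. rewrite IH; auto. Qed.

Lemma last_map (th : R -> R) a l : last (map th l) (th a) = th (last l a).
Proof.
  revert a; induction l as [|b l IH]; intros a; simpl; auto.
  change (last (th b :: map th l) (th a) = th (last (b :: l) a)).
  rewrite !last_cons_gen. apply IH.
Qed.

Lemma incr_from_shift T a l : incr_from a l -> incr_from (a + T) (map (fun x => x + T) l).
Proof. revert a; induction l as [|b l IH]; intros a H; simpl in *; auto. destruct H. split; [lra|auto]. Qed.

Lemma vnorm2_add_le x y al be : 0 < al -> 0 < be ->
  vnorm2 (vadd x y) / (al + be) <= vnorm2 x / al + vnorm2 y / be.
Proof.
  intros Ha Hb. destruct x as [x1 x2], y as [y1 y2]. unfold vnorm2, vadd; simpl.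
  apply (Rmult_le_reg_r (al * be * (al + be))). apply Rmult_lt_0_compat; nra.
  replace (((x1 + y1) * (x1 + y1) + (x2 + y2) * (x2 + y2)) / (al + be) * (al * be * (al + be)))
    with (((x1 + y1) * (x1 + y1) + (x2 + y2) * (x2 + y2)) * (al * be)) by (field; lra).
  replace ((x1 * x1 + x2 * x2) / al + (y1 * y1 + y2 * y2) / be) with
    (((x1 * x1 + x2 * x2) * be + (y1 * y1 + y2 * y2) * al) / (al * be)) by (field; lra).
  replace (((x1 * x1 + x2 * x2) * be + (y1 * y1 + y2 * y2) * al) / (al * be) * (al * be * (al + be)))
    with (((x1 * x1 + x2 * x2) * be + (y1 * y1 + y2 * y2) * al) * (al + be)) by (field; lra).
  pose proof (Rle_0_sqr (be * x1 - al * y1)). pose proof (Rle_0_sqr (be * x2 - al * y2)).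
  unfold Rsqr in *. nra.
Qed.

Lemma rterm_refine g a m b : a < m -> m < b -> rterm g a b <= rterm g a m + rterm g m b.
Proof.
  intros H1 H2. unfold rterm.
  replace (vsub (g b) (g a)) with (vadd (vsub (g m) (g a)) (vsub (g b) (g m)))
    by (destruct (g a), (g m), (g b); unfold vadd, vsub; simpl; f_equal; ring).
  replace (b - a) with ((m - a) + (b - m)) by ring.
  apply vnorm2_add_le; lra.
Qed.

Lemma rterm_nonneg g a b : a < b -> 0 <= rterm g a b.
Proof. intros. unfold rterm. apply Rdiv_le_0_compat. apply vnorm2_nonneg. lra. Qed.

Lemma psum_nonneg g a l : incr_from a l -> 0 <= psum (rterm g) a l.
Proof. intros H. rewrite <- rsum_psum. apply rsum_nonneg; auto. Qed.

Lemma psum_shift (g : curve) (k : Z) a l : periodic g ->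
  psum (rterm g) (a + 2 * PI * IZR k) (map (fun x => x + 2 * PI * IZR k) l) = psum (rterm g) a l.
Proof.
  intros Pg. rewrite (psum_map (rterm g) (fun x => x + 2 * PI * IZR k)).
  apply psum_ext. intros x x'. unfold rterm. rewrite !periodic_Z by auto. f_equal. ring.
Qed.

Lemma span_gen z z1 z2 S f : good z z1 z2 S f -> forall l a p,
  - PI <= a <= PI -> incr_from a l -> last l a <= 3 * PI ->
  incr_from (- PI) p -> last p (- PI) = a ->
  psum (rterm z2) (- PI) p + psum (rterm z2) a l <= 2 * S.
Proof.
  intros G. pose proof G as (_ & _ & _ & HS0 & _).
  pose proof (good_per2 _ _ _ _ _ G) as P2. pose proof PI_RGT_0.
  induction l as [|b l IH]; intros a p Ha Hl Hlast Hp Hpl.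
  - simpl. rewrite <- rsum_psum. pose proof (riesz_sub z z1 z2 S f (- PI) p G ltac:(lra) Hp ltac:(lra)). lra.
  - destruct Hl as [Hab Hl]. rewrite last_cons_gen in Hlast. cbn [psum].
    destruct (Rle_dec b PI) as [Hb|Hb].
    + specialize (IH b (p ++ b :: nil) ltac:(lra) Hl Hlast).
      rewrite psum_app1, Hpl in IH. assert (Hinc : incr_from (- PI) (p ++ b :: nil)) by (apply incr_from_app; [auto|lra]).
      specialize (IH Hinc (last_app1 p b (- PI))). lra.
    +
      assert (H2 : psum (rterm z2) PI (b :: l) <= S).
      { rewrite <- (psum_shift z2 (-1) PI (b :: l) P2).
        replace (PI + 2 * PI * IZR (-1)) with (- PI) by (simpl; ring).
        rewrite <- rsum_psum. apply (riesz_sub z z1 z2 S f); auto; try lra.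
        - pose proof (incr_from_shift (2 * PI * IZR (-1)) PI (b :: l) ltac:(split; [lra|auto])) as I.
          replace (PI + 2 * PI * IZR (-1)) with (- PI) in I by (simpl; ring). exact I.
        - rewrite (last_default _ (- PI) (PI + 2 * PI * IZR (-1))) by discriminate.
          pose proof (last_map (fun x => x + 2 * PI * IZR (-1)) PI (b :: l)) as LM.
          cbv beta in LM. rewrite LM. rewrite last_cons_gen. simpl IZR. lra. }
      cbn [psum] in H2.
      destruct (Req_dec a PI) as [Ea|Na].
      * subst a. pose proof (riesz_sub z z1 z2 S f (- PI) p G ltac:(lra) Hp ltac:(lra)) as Hr.
        rewrite rsum_psum in Hr. rewrite Ea. lra.
      * assert (H1 : psum (rterm z2) (- PI) (p ++ PI :: nil) <= S).
        { rewrite <- rsum_psum. apply (riesz_sub z z1 z2 S f); auto; try lra.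
          apply incr_from_app; auto. lra. rewrite last_app1. lra. }
        rewrite psum_app1, Hpl in H1.
        pose proof (rterm_refine z2 a PI b ltac:(lra) ltac:(lra)). lra.
Qed.

Lemma span_incr z z1 z2 S f : good z z1 z2 S f -> forall a l,
  incr_from a l -> last l a <= a + 2 * PI -> psum (rterm z2) a l <= 2 * S.
Proof.
  intros G a l Hl Hlast. pose proof (good_per2 _ _ _ _ _ G) as P2. pose proof PI_RGT_0.
  destruct (reduce_T a) as [k Hk].
  rewrite <- (psum_shift z2 k a l P2).
  set (a' := a + 2 * PI * IZR k) in *.
  assert (Hl' : incr_from a' (map (fun x => x + 2 * PI * IZR k) l)) by (apply incr_from_shift; auto).
  assert (Hlast' : last (map (fun x => x + 2 * PI * IZR k) l) a' <= 3 * PI).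
  { unfold a'. pose proof (last_map (fun x => x + 2 * PI * IZR k) a l) as LM.
    cbv beta in LM. rewrite LM. unfold a' in *. lra. }
  destruct (Req_dec a' (- PI)) as [E|NE].
  - pose proof (span_gen z z1 z2 S f G _ a' nil ltac:(lra) Hl' Hlast' I ltac:(simpl; lra)).
    simpl in H0. lra.
  - pose proof (span_gen z z1 z2 S f G _ a' (a' :: nil) ltac:(lra) Hl' Hlast' ltac:(simpl; split; [lra|auto]) ltac:(reflexivity)).
    simpl in H0. pose proof (rterm_nonneg z2 (- PI) a' ltac:(lra)). lra.
Qed.

Definition aterm (g : curve) (x x' : R) : R := vnorm2 (vsub (g x') (g x)) / Rabs (x' - x).

Fixpoint decr_from (a : R) (l : list R) : Prop :=
  match l with nil => True | b :: l' => b < a /\ decr_from b l' end.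

Lemma psum_ext_incr F F' a l : incr_from a l -> (forall x x', x < x' -> F x x' = F' x x') ->
  psum F a l = psum F' a l.
Proof.
  intros H E; revert a H; induction l as [|b l IH]; intros a H; simpl; auto.
  destruct H. rewrite E, IH; auto.
Qed.

Lemma aterm_sym g x x' : aterm g x x' = aterm g x' x.
Proof. unfold aterm. rewrite vnorm2_vsub_sym. f_equal. rewrite <- Rabs_Ropp. f_equal. ring. Qed.

Lemma decr_rev g a l : decr_from a l -> exists a' l', incr_from a' l' /\ a' = last l a /\
  last l' a' = a /\ psum (aterm g) a l = psum (aterm g) a' l'.
Proof.
  revert a; induction l as [|b m IH]; intros a H.
  - exists a, nil. simpl. repeat split; auto.
  - destruct H as [Hb Hm]. destruct (IH b Hm) as [a'' [l'' [H1 [H2 [H3 H4]]]]].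
    exists a'', (l'' ++ a :: nil). split; [|split; [|split]].
    + apply incr_from_app; auto. rewrite H3. auto.
    + rewrite last_cons_gen. auto.
    + apply last_app1.
    + cbn [psum]. rewrite psum_app1, H3, H4, aterm_sym. ring.
Qed.

Lemma decr_from_last a l : decr_from a l -> last l a <= a.
Proof.
  revert a; induction l as [|x l IH]; intros a H.
  - simpl; lra.
  - rewrite last_cons_gen. destruct H as [H1 H2]. specialize (IH x H2). lra.
Qed.

Lemma span_mono z z1 z2 S f : good z z1 z2 S f -> forall a l,
  (incr_from a l /\ last l a <= a + 2 * PI) \/ (decr_from a l /\ a - 2 * PI <= last l a) ->
  psum (aterm z2) a l <= 2 * S.
Proof.
  intros G a l [[Hl Hlast]|[Hl Hlast]].
  - rewrite (psum_ext_incr (aterm z2) (rterm z2) a l Hl).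
    apply (span_incr z z1 z2 S f G); auto.
    intros x x' Hx. unfold aterm, rterm. rewrite Rabs_right by lra. auto.
  - destruct (decr_rev z2 a l Hl) as [a' [l' [H1 [H2 [H3 H4]]]]]. rewrite H4.
    rewrite (psum_ext_incr (aterm z2) (rterm z2) a' l' H1).
    apply (span_incr z z1 z2 S f G); auto. lra.
    intros x x' Hx. unfold aterm, rterm. rewrite Rabs_right by lra. auto.
Qed.

Definition cross (u v : pt) : R := fst u * snd v - snd u * fst v.

Lemma Jrot_norm p : vnorm (Jrot p) = vnorm p.
Proof. unfold vnorm, vnorm2, Jrot; simpl. f_equal. ring. Qed.

Lemma abs_le_of_sq x y : 0 <= y -> x * x <= y * y -> Rabs x <= y.
Proof.
  intros Hy H. rewrite <- (sqrt_square y) by auto. rewrite <- sqrt_Rsqr_abs.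
  apply sqrt_le_1_alt. unfold Rsqr; lra.
Qed.

Lemma cross_bound u v : Rabs (cross u v) <= vnorm u * vnorm v.
Proof.
  pose proof (vnorm_nonneg u); pose proof (vnorm_nonneg v).
  apply abs_le_of_sq. nra.
  replace (vnorm u * vnorm v * (vnorm u * vnorm v)) with ((vnorm u * vnorm u) * (vnorm v * vnorm v)) by ring.
  rewrite !vnorm_sq. unfold cross, vnorm2.
  destruct u as [a b], v as [c d]; simpl.
  pose proof (Rle_0_sqr (a*c+b*d)). unfold Rsqr in *. nra.
Qed.

Lemma Gf_cross u w : vnorm2 u <> 0 -> Gf u w = vscale (cross u w / (vnorm2 u * vnorm2 u)) (Jrot u).
Proof.
  intros H. unfold Gf, cross, vscale, vsub, Jrot, dotp. unfold vnorm2 in *.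
  destruct u as [a b], w as [c d]; simpl in *. f_equal; field; auto.
Qed.

Lemma Gf_lin u v v' : vsub (Gf u v') (Gf u v) = Gf u (vsub v' v).
Proof.
  unfold Gf, vsub, vscale, dotp. destruct u as [a b], v as [c d], v' as [e g]; simpl.
  generalize (vnorm2 (a, b)). intros Q. f_equal; unfold Rdiv; ring.
Qed.

Lemma vnorm_pos_sq u : 0 < vnorm u -> vnorm2 u = vnorm u * vnorm u /\ vnorm2 u <> 0.
Proof. intros H. rewrite vnorm_sq. split; auto. rewrite <- vnorm_sq. nra. Qed.

Lemma Gf_bound u w : 0 < vnorm u -> vnorm (Gf u w) <= vnorm w / vnorm2 u.
Proof.
  intros H. destruct (vnorm_pos_sq u H) as [E NZ].
  rewrite Gf_cross by auto. rewrite vnorm_scale, Jrot_norm, E.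
  pose proof (cross_bound u w) as Cb.
  set (n := vnorm u) in *. pose proof (vnorm_nonneg w).
  unfold Rdiv. rewrite Rabs_mult, Rabs_inv, (Rabs_right (n * n * (n * n))) by nra.
  apply Rle_trans with (n * vnorm w * / (n * n * (n * n)) * n).
  - apply Rmult_le_compat_r; [lra|]. apply Rmult_le_compat_r; auto.
    left; apply Rinv_0_lt_compat; nra.
  - right. field. lra.
Qed.

Lemma vnorm_rev_tri a b : Rabs (vnorm a - vnorm b) <= vnorm (vsub a b).
Proof.
  assert (H1 : vnorm a <= vnorm (vsub a b) + vnorm b).
  { replace a with (vadd (vsub a b) b) at 1 by (destruct a, b; unfold vadd, vsub; simpl; f_equal; ring).
    apply vnorm_triangle. }
  assert (H2 : vnorm b <= vnorm (vsub a b) + vnorm a).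
  { rewrite vnorm_vsub_sym.
    replace b with (vadd (vsub b a) a) at 1 by (destruct a, b; unfold vadd, vsub; simpl; f_equal; ring).
    apply vnorm_triangle. }
  apply Rabs_le. lra.
Qed.

Lemma prod3_le x y w X Y W : 0 <= x <= X -> 0 <= y <= Y -> 0 <= w <= W -> x * y * w <= X * Y * W.
Proof.
  intros. apply Rmult_le_compat; try nra.
Qed.

Lemma scal_ineq n n' d m : 0 < m -> m <= n -> m <= n' -> Rabs (n - n') <= d -> d <= m / 2 ->
  d / (n' * n' * n') + d * n / (n' * n' * (n' * n')) +
  d * (n + n') * (n * n + n' * n') / (n * n * (n' * n' * (n' * n'))) <= 25 * d / (m * m * m).
Proof.
  intros Hm Hn Hn' Hd Hdm. apply Rabs_le_inv in Hd.
  assert (Hd0 : 0 <= d) by lra.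
  set (a := / n'). set (b := / n). set (mu := / m).
  assert (Ha : n' * a = 1) by (unfold a; field; lra).
  assert (Hb : n * b = 1) by (unfold b; field; lra).
  assert (Ha0 : 0 < a) by (unfold a; apply Rinv_0_lt_compat; lra).
  assert (Hb0 : 0 < b) by (unfold b; apply Rinv_0_lt_compat; lra).
  assert (Hamu : a <= mu) by (unfold a, mu; apply Rinv_le_contravar; lra).
  assert (Hbmu : b <= mu) by (unfold b, mu; apply Rinv_le_contravar; lra).
  assert (HX : 0 <= n * a <= 3/2).
  { split. nra. assert (n <= 3/2 * n') by lra. nra. }
  assert (HY : 0 <= n' * b <= 3/2).
  { split. nra. assert (n' <= 3/2 * n) by lra. nra. }
  assert (E1 : d / (n' * n' * n') = d * (a * a * a)) by (unfold a; field; lra).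
  assert (E2 : d * n / (n' * n' * (n' * n')) = d * (n * a) * (a * a * a)) by (unfold a; field; lra).
  assert (E3 : d * (n + n') * (n * n + n' * n') / (n * n * (n' * n' * (n' * n'))) =
     d * ((n * a + 1) * ((n * a) * (n * a) + 1) * ((n' * b) * (n' * b))) * (a * a * a)).
  { unfold a, b. field. lra. }
  assert (E4 : 25 * d / (m * m * m) = 25 * d * (mu * mu * mu)) by (unfold mu; field; lra).
  rewrite E1, E2, E3, E4.
  assert (Hc : a * a * a <= mu * mu * mu) by (apply prod3_le; lra).
  assert (Hp : (n * a + 1) * ((n * a) * (n * a) + 1) * ((n' * b) * (n' * b)) <= 5/2 * (13/4) * (9/4)).
  { apply prod3_le; nra. }
  assert (0 <= a * a * a) by (apply Rmult_le_pos; [apply Rmult_le_pos|]; lra).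
  assert (0 <= (n * a + 1) * ((n * a) * (n * a) + 1) * ((n' * b) * (n' * b))) by
    (apply Rmult_le_pos; [apply Rmult_le_pos|]; nra).
  set (P := (n * a + 1) * ((n * a) * (n * a) + 1) * ((n' * b) * (n' * b))) in *.
  set (a3 := a * a * a) in *. set (m3 := mu * mu * mu) in *.
  assert (d * (n * a) * a3 <= d * (3/2) * m3).
  { apply Rmult_le_compat; try nra. }
  assert (d * P * a3 <= d * (5/2 * (13/4) * (9/4)) * m3).
  { apply Rmult_le_compat; try nra. }
  assert (d * a3 <= d * m3) by nra.
  nra.
Qed.

Lemma vnorm_vsub_le a b : vnorm (vsub a b) <= vnorm a + vnorm b.
Proof. rewrite vsub_vadd. eapply Rle_trans; [apply vnorm_triangle|]. rewrite vnorm_opp. lra. Qed.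

Lemma inv4_diff n n' d : 0 < n -> 0 < n' -> Rabs (n - n') <= d ->
  Rabs (/ (n' * n' * (n' * n')) - / (n * n * (n * n))) <=
  d * (n + n') * (n * n + n' * n') / (n * n * (n * n) * (n' * n' * (n' * n'))).
Proof.
  intros Hn Hn' Hd.
  set (P := (n + n') * (n * n + n' * n')). set (D := n * n * (n * n) * (n' * n' * (n' * n'))).
  assert (HP : 0 < P) by (unfold P; apply Rmult_lt_0_compat; nra).
  assert (HD : 0 < D) by (unfold D; repeat apply Rmult_lt_0_compat; lra).
  replace (/ (n' * n' * (n' * n')) - / (n * n * (n * n))) with ((n - n') * P * / D) by (unfold P, D; field; lra).
  replace (d * (n + n') * (n * n + n' * n') / D) with (d * P * / D) by (unfold P; field; lra).
  rewrite (Rabs_mult ((n - n') * P)), (Rabs_mult (n - n') P).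
  rewrite (Rabs_right P) by lra. rewrite (Rabs_right (/ D)) by (left; apply Rinv_0_lt_compat; lra).
  apply Rmult_le_compat_r. left; apply Rinv_0_lt_compat; lra.
  apply Rmult_le_compat_r; lra.
Qed.

Lemma Gf_lip_u u u' v m M : 0 < m -> m <= vnorm u -> m <= vnorm u' -> vnorm v <= M ->
  vnorm (vsub (Gf u' v) (Gf u v)) <= 25 * M * vnorm (vsub u' u) / (m * m * m).
Proof.
  intros Hm Hn Hn' HM.
  set (d := vnorm (vsub u' u)).
  pose proof (vnorm_nonneg v) as Hv0. pose proof (vnorm_nonneg (vsub u' u)) as Hd0. fold d in Hd0.
  destruct (vnorm_pos_sq u ltac:(lra)) as [E NZ]. destruct (vnorm_pos_sq u' ltac:(lra)) as [E' NZ'].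
  set (n := vnorm u) in *. set (n' := vnorm u') in *.
  destruct (Rle_dec d (m / 2)) as [Small|Large].
  2: { eapply Rle_trans; [apply vnorm_vsub_le|].
       pose proof (Gf_bound u' v (Rlt_le_trans _ _ _ Hm Hn')). pose proof (Gf_bound u v (Rlt_le_trans _ _ _ Hm Hn)).
       rewrite E in H0. rewrite E' in H.
       assert (vnorm v / (n' * n') <= M / (m * m)).
       { unfold Rdiv. apply Rmult_le_compat; auto. left; apply Rinv_0_lt_compat; nra.
         apply Rinv_le_contravar; nra. }
       assert (vnorm v / (n * n) <= M / (m * m)).
       { unfold Rdiv. apply Rmult_le_compat; auto. left; apply Rinv_0_lt_compat; nra.
         apply Rinv_le_contravar; nra. }
       assert (2 * (M / (m * m)) <= 25 * M * d / (m * m * m)).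
       { replace (25 * M * d / (m * m * m)) with ((25 * d / m) * (M / (m * m))) by (field; lra).
         apply Rmult_le_compat_r. apply Rdiv_le_0_compat; nra.
         apply (Rmult_le_reg_r m); auto. unfold Rdiv. rewrite Rmult_assoc, Rinv_l by lra. lra. }
       lra. }
  set (Q := vnorm2 u) in *. set (Q' := vnorm2 u') in *.
  set (A := vscale (cross (vsub u' u) v / (Q' * Q')) (Jrot u')).
  set (B := vscale (cross u v) (vadd (vscale (/ (Q' * Q')) (Jrot (vsub u' u)))
                                       (vscale (/ (Q' * Q') - / (Q * Q)) (Jrot u)))).
  assert (Eid : vsub (Gf u' v) (Gf u v) = vadd A B).
  { rewrite !Gf_cross by auto. unfold A, B. fold Q Q'.
    unfold vsub, vadd, vscale, Jrot, cross. destruct u as [a1 a2], u' as [b1 b2], v as [c1 c2]; simpl.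
    f_equal; field; auto. }
  rewrite Eid. eapply Rle_trans; [apply vnorm_triangle|].
  assert (HA : vnorm A <= d * M / (n' * n' * n')).
  { unfold A. rewrite vnorm_scale, Jrot_norm. fold n'. rewrite E'.
    pose proof (cross_bound (vsub u' u) v) as Cb. fold d in Cb.
    unfold Rdiv. rewrite Rabs_mult, Rabs_inv, (Rabs_right (n' * n' * (n' * n'))) by nra.
    apply Rle_trans with (d * vnorm v * / (n' * n' * (n' * n')) * n').
    - apply Rmult_le_compat_r; [lra|]. apply Rmult_le_compat_r; auto. left; apply Rinv_0_lt_compat; nra.
    - replace (d * vnorm v * / (n' * n' * (n' * n')) * n') with (d * vnorm v * / (n' * n' * n')) by (field; lra).
      apply Rmult_le_compat_r. left; apply Rinv_0_lt_compat; nra. nra. }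
  assert (HB : vnorm B <= n * M * (d / (n' * n' * (n' * n')) +
              d * (n + n') * (n * n + n' * n') / (n * n * (n * n) * (n' * n' * (n' * n'))) * n)).
  { unfold B. rewrite vnorm_scale. pose proof (cross_bound u v) as Cb. fold n in Cb.
    apply Rmult_le_compat; try apply Rabs_pos; try apply vnorm_nonneg.
    - eapply Rle_trans; [apply Cb|]. apply Rmult_le_compat_l; lra.
    - eapply Rle_trans; [apply vnorm_triangle|]. rewrite !vnorm_scale, !Jrot_norm. fold d n.
      rewrite E, E'. apply Rplus_le_compat.
      + rewrite Rabs_inv, Rabs_right by nra. right. field. lra.
      + apply Rmult_le_compat_r; [lra|]. apply inv4_diff; try lra.
        pose proof (vnorm_rev_tri u u'). fold n n' in H. rewrite vnorm_vsub_sym in H. fold d in H. auto. }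
  pose proof (scal_ineq n n' d m Hm Hn Hn' ltac:(pose proof (vnorm_rev_tri u u') as T; fold n n' in T;
     rewrite vnorm_vsub_sym in T; fold d in T; auto) Small) as SC.
  assert (EB : n * M * (d / (n' * n' * (n' * n')) +
              d * (n + n') * (n * n + n' * n') / (n * n * (n * n) * (n' * n' * (n' * n'))) * n) =
           M * (d * n / (n' * n' * (n' * n')) + d * (n + n') * (n * n + n' * n') / (n * n * (n' * n' * (n' * n'))))).
  { field. lra. }
  rewrite EB in HB.
  assert (EA : d * M / (n' * n' * n') = M * (d / (n' * n' * n'))) by (field; lra).
  rewrite EA in HA.
  replace (25 * M * d / (m * m * m)) with (M * (25 * d / (m * m * m))) by (field; lra).
  assert (M * (d / (n' * n' * n') + d * n / (n' * n' * (n' * n')) +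
     d * (n + n') * (n * n + n' * n') / (n * n * (n' * n' * (n' * n')))) <= M * (25 * d / (m * m * m))).
  { apply Rmult_le_compat_l; lra. }
  lra.
Qed.

Lemma Gf_diff u u' v v' m M : 0 < m -> m <= vnorm u -> m <= vnorm u' -> vnorm v <= M ->
  vnorm2 (vsub (Gf u' v') (Gf u v)) <=
  2 * (vnorm2 (vsub v' v) / (m * m * (m * m))) + 2 * ((25 * M / (m * m * m)) * (25 * M / (m * m * m))) * vnorm2 (vsub u' u).
Proof.
  intros Hm Hn Hn' HM.
  replace (vsub (Gf u' v') (Gf u v)) with (vadd (Gf u' (vsub v' v)) (vsub (Gf u' v) (Gf u v))).
  2: { rewrite <- Gf_lin. destruct (Gf u' v'), (Gf u' v), (Gf u v); unfold vadd, vsub; simpl; f_equal; ring. }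
  pose proof (Gf_bound u' (vsub v' v) ltac:(lra)) as B1.
  pose proof (Gf_lip_u u u' v m M Hm Hn Hn' HM) as B2.
  destruct (vnorm_pos_sq u' ltac:(lra)) as [E' _]. rewrite E' in B1.
  assert (B1' : vnorm (Gf u' (vsub v' v)) <= vnorm (vsub v' v) / (m * m)).
  { eapply Rle_trans; [apply B1|]. unfold Rdiv. apply Rmult_le_compat_l. apply vnorm_nonneg.
    apply Rinv_le_contravar; nra. }
  pose proof (vnorm_triangle (Gf u' (vsub v' v)) (vsub (Gf u' v) (Gf u v))) as T.
  set (X := vnorm (vsub v' v) / (m * m)) in *.
  set (Y := 25 * M * vnorm (vsub u' u) / (m * m * m)) in *.
  assert (HX : X * X = vnorm2 (vsub v' v) / (m * m * (m * m))).
  { unfold X. rewrite <- vnorm_sq. field. lra. }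
  assert (HY : Y * Y = (25 * M / (m * m * m)) * (25 * M / (m * m * m)) * vnorm2 (vsub u' u)).
  { unfold Y. rewrite <- vnorm_sq. field. lra. }
  replace (2 * (vnorm2 (vsub v' v) / (m * m * (m * m))) +
     2 * (25 * M / (m * m * m) * (25 * M / (m * m * m))) * vnorm2 (vsub u' u)) with (2 * (X * X) + 2 * (Y * Y))
    by (rewrite HX, HY; ring).
  pose proof (vnorm_nonneg (vadd (Gf u' (vsub v' v)) (vsub (Gf u' v) (Gf u v)))).
  pose proof (vnorm_nonneg (Gf u' (vsub v' v))). pose proof (vnorm_nonneg (vsub (Gf u' v) (Gf u v))).
  rewrite <- vnorm_sq.
  set (W := vnorm (vadd (Gf u' (vsub v' v)) (vsub (Gf u' v) (Gf u v)))) in *.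
  assert (W <= X + Y) by lra. assert (0 <= X + Y) by lra.
  assert (W * W <= (X + Y) * (X + Y)) by (apply Rmult_le_compat; lra).
  pose proof (Rle_0_sqr (X - Y)). unfold Rsqr in *. nra.
Qed.

Lemma z1_lip z z1 z2 S f x x' : good z z1 z2 S f ->
  vnorm (vsub (z1 x') (z1 x)) <= 2 * qS S * Rabs (x' - x).
Proof.
  intros G. pose proof G as (_ & _ & [D1x D1y] & _).
  pose proof (z2_comp_bound _ _ _ _ _ G) as B.
  rewrite Rmult_assoc. apply vnorm_le_of_comp.
  - apply Rmult_le_pos; [apply qS_nonneg|apply Rabs_pos].
  - change (fst (vsub (z1 x') (z1 x))) with (fst (z1 x') - fst (z1 x)).
    apply (comp_lip (fun t => fst (z1 t)) (fun t => fst (z2 t))); auto. intros t; apply B.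
  - change (snd (vsub (z1 x') (z1 x))) with (snd (z1 x') - snd (z1 x)).
    apply (comp_lip (fun t => snd (z1 t)) (fun t => snd (z2 t))); auto. intros t; apply B.
Qed.

Definition setting z z1 z2 S f y y1 c th sg : Prop :=
  good z z1 z2 S f /\ ycond z y y1 c /\ liftok z y (- PI - 1) (PI + 1) th (2 * f * c) /\
  (sg = 1 \/ sg = -1) /\
  (forall s, - PI - 1 < s < PI + 1 -> thp z1 y1 th s = sg * c / vnorm (z1 (th s))) /\
  sg * (th PI - th (- PI)) = 2 * PI /\ / f <= c /\ c <= 4 * PI * qS S.

Lemma y2_on z z1 z2 S f y y1 c th sg : setting z z1 z2 S f y y1 c th sg ->
  forall s, - PI <= s <= PI -> y2fun c z z1 z2 y s = vscale (c * c) (Gf (z1 (th s)) (z2 (th s))).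
Proof.
  intros (G & Y & HL & _) s Hs. pose proof HL as (_ & HLz & _). pose proof Y as (_ & _ & _ & _ & Hon).
  unfold y2fun, y2of. pose proof PI_RGT_0.
  assert (E : z (pre z (y s)) = z (th s)) by (rewrite pre_spec by auto; rewrite HLz; auto; lra).
  destruct (same_point _ _ _ _ _ _ _ G E) as [F1 F2]. rewrite F1, F2. auto.
Qed.

Lemma vnorm2_scale k p : vnorm2 (vscale k p) = k * k * vnorm2 p.
Proof. unfold vnorm2, vscale; simpl. ring. Qed.

Lemma vsub_scale k p q : vsub (vscale k p) (vscale k q) = vscale k (vsub p q).
Proof. unfold vsub, vscale; simpl. f_equal; ring. Qed.

Lemma per_term z z1 z2 S f y y1 c th sg : setting z z1 z2 S f y y1 c th sg ->
  forall a b, - PI <= a -> a < b -> b <= PI ->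
  rterm (y2fun c z z1 z2 y) a b <=
    (2 * c^5 * f^5) * aterm z2 (th a) (th b) + (20000 * c^5 * f^7 * qS S ^ 4) * (sg * (th b - th a)).
Proof.
  intros St a b Ha Hab Hb. pose proof St as (G & Y & HL & Hsg & Hth & Hdeg & Hc1 & Hc2).
  pose proof Y as (_ & _ & _ & Hc & _). pose proof G as (_ & _ & _ & HS0 & _ & Hf & _).
  pose proof PI_RGT_0.
  destruct (mono _ _ _ _ _ _ _ _ _ _ G Y HL Hsg Hth a b Ha ltac:(lra) Hb) as [Mo1 Mo2].
  pose proof (M1_pos _ _ _ _ _ G) as HM1.
  assert (Hcm : 0 < c / M1 S) by (apply Rdiv_lt_0_compat; lra).
  assert (Hdt : 0 < sg * (th b - th a)).
  { assert (0 < c / M1 S * (b - a)) by (apply Rmult_lt_0_compat; lra). lra. }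
  assert (Hadt : Rabs (th b - th a) = sg * (th b - th a)).
  { destruct Hsg as [E|E]; rewrite E in *; [rewrite Rabs_right|rewrite Rabs_left]; lra. }
  set (dt := sg * (th b - th a)) in *.
  unfold rterm. rewrite !(y2_on _ _ _ _ _ _ _ _ _ _ St) by lra.
  rewrite vsub_scale, vnorm2_scale.
  set (u := z1 (th a)). set (u' := z1 (th b)). set (v := z2 (th a)). set (v' := z2 (th b)).
  assert (Hm : 0 < / f) by (apply Rinv_0_lt_compat; lra).
  pose proof (Gf_diff u u' v v' (/ f) (2 * qS S) Hm (speed_lower _ _ _ _ _ G _) (speed_lower _ _ _ _ _ G _)
      (z2_bound _ _ _ _ _ G _)) as GD.
  assert (Em4 : / f * / f * (/ f * / f) = / (f * f * f * f)) by (field; lra).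
  assert (Em3 : 25 * (2 * qS S) / (/ f * / f * / f) = 50 * qS S * (f * f * f)) by (field; lra).
  rewrite Em3 in GD.
  pose proof (z1_lip _ _ _ _ _ (th a) (th b) G) as ZL. fold u u' in ZL. rewrite Hadt in ZL.
  assert (ZL2 : vnorm2 (vsub u' u) <= (2 * qS S * dt) * (2 * qS S * dt)).
  { apply vnorm2_le_of_vnorm. auto. }
  assert (Hat : aterm z2 (th a) (th b) = vnorm2 (vsub v' v) / dt) by (unfold aterm; rewrite Hadt; auto).
  rewrite Hat.
  assert (Hba : dt / (c * f) <= b - a).
  { apply (Rmult_le_reg_r (c * f)). nra. unfold Rdiv. rewrite Rmult_assoc, Rinv_l by nra. lra. }
  assert (Hba0 : 0 < b - a) by lra.
  set (Dv := vnorm2 (vsub v' v)) in *. set (Du := vnorm2 (vsub u' u)) in *.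
  assert (HDv : 0 <= Dv) by apply vnorm2_nonneg. assert (HDu : 0 <= Du) by apply vnorm2_nonneg.
  set (q := qS S) in *. assert (Hq : 0 <= q) by apply qS_nonneg.
  assert (GD' : vnorm2 (vsub (Gf u' v') (Gf u v)) <= 2 * f^4 * Dv + 20000 * q^4 * f^6 * dt * dt).
  { eapply Rle_trans; [apply GD|].
    replace (2 * (Dv / (/ f * / f * (/ f * / f)))) with (2 * f^4 * Dv) by (field; lra).
    replace (2 * (50 * q * (f * f * f) * (50 * q * (f * f * f))) * Du) with (5000 * q^2 * f^6 * Du) by ring.
    assert (5000 * q ^ 2 * f ^ 6 * Du <= 5000 * q ^ 2 * f ^ 6 * ((2 * q * dt) * (2 * q * dt))).
    { apply Rmult_le_compat_l; auto. repeat apply Rmult_le_pos; try lra; apply pow_le; lra. }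
    nra. }
  set (Gd := vnorm2 (vsub (Gf u' v') (Gf u v))) in *.
  assert (HGd : 0 <= Gd) by apply vnorm2_nonneg.
  assert (Hinv : / (b - a) <= c * f / dt).
  { apply (Rmult_le_reg_r (b - a)); auto. rewrite Rinv_l by lra.
    apply (Rmult_le_reg_l dt); auto. unfold Rdiv.
    replace (dt * (c * f * / dt * (b - a))) with (c * f * (b - a)) by (field; lra). nra. }
  unfold Rdiv at 1.
  apply Rle_trans with (c * c * (c * c) * Gd * (c * f / dt)).
  { apply Rmult_le_compat_l; auto. apply Rmult_le_pos; auto. nra. }
  apply Rle_trans with (c * c * (c * c) * (2 * f ^ 4 * Dv + 20000 * q ^ 4 * f ^ 6 * dt * dt) * (c * f / dt)).
  { apply Rmult_le_compat_r. apply Rdiv_le_0_compat; nra. apply Rmult_le_compat_l; auto. nra. }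
  right. field. lra.
Qed.

Lemma map_incr (th : R -> R) lo hi a l :
  (forall x x', lo <= x -> x < x' -> x' <= hi -> th x < th x') ->
  lo <= a -> incr_from a l -> last l a <= hi -> incr_from (th a) (map th l).
Proof.
  intros H; revert a; induction l as [|b l IH]; intros a Ha Hl Hlast; simpl; auto.
  destruct Hl as [Hab Hl]. rewrite last_cons_gen in Hlast.
  pose proof (incr_from_last b l Hl). split. apply H; lra. apply IH; auto; lra.
Qed.

Lemma map_decr (th : R -> R) lo hi a l :
  (forall x x', lo <= x -> x < x' -> x' <= hi -> th x' < th x) ->
  lo <= a -> incr_from a l -> last l a <= hi -> decr_from (th a) (map th l).
Proof.
  intros H; revert a; induction l as [|b l IH]; intros a Ha Hl Hlast; simpl; auto.
  destruct Hl as [Hab Hl]. rewrite last_cons_gen in Hlast.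
  pose proof (incr_from_last b l Hl). split. apply H; lra. apply IH; auto; lra.
Qed.

Definition Sy_bound (c f S : R) : R :=
  (2 * c^5 * f^5) * (2 * S) + (20000 * c^5 * f^7 * qS S ^ 4) * (2 * PI).

Lemma riesz_y2 z z1 z2 S f y y1 c th sg : setting z z1 z2 S f y y1 c th sg ->
  forall l, Defs.partition l -> rsum (y2fun c z z1 z2 y) (- PI) l <= Sy_bound c f S.
Proof.
  intros St l [Hnil [Hl Hlast]]. pose proof St as (G & Y & HL & Hsg & Hth & Hdeg & Hc1 & Hc2).
  pose proof Y as (_ & _ & _ & Hc & _). pose proof G as (_ & _ & _ & HS0 & _ & Hf & _).
  pose proof PI_RGT_0.
  rewrite (last_default l 0 (- PI) Hnil) in Hlast.
  rewrite rsum_psum.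
  set (C1 := 2 * c^5 * f^5). set (C2 := 20000 * c^5 * f^7 * qS S ^ 4).
  eapply Rle_trans.
  { apply (psum_le _ (fun x x' => C1 * aterm z2 (th x) (th x') + C2 * (sg * th x' - sg * th x)) (- PI) PI);
      [|lra|auto|lra].
    intros x x' H1 H2 H3. pose proof (per_term _ _ _ _ _ _ _ _ _ _ St x x' H1 H2 H3). fold C1 C2 in H0.
    replace (sg * th x' - sg * th x) with (sg * (th x' - th x)) by ring. auto. }
  rewrite psum_lin. rewrite (psum_tele (fun x => sg * th x)). rewrite Hlast.
  rewrite <- (psum_map (aterm z2) th).
  assert (HM1 := M1_pos _ _ _ _ _ G).
  assert (Hcm : 0 < c / M1 S) by (apply Rdiv_lt_0_compat; lra).
  assert (Sp : psum (aterm z2) (th (- PI)) (map th l) <= 2 * S).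
  { apply (span_mono z z1 z2 S f G).
    pose proof (last_map th (- PI) l) as LM. rewrite Hlast in LM.
    destruct Hsg as [E|E]; rewrite E in *.
    - left. split.
      + apply (map_incr th (- PI) PI); auto; try lra. intros x x' H1 H2 H3.
        destruct (mono _ _ _ _ _ _ _ _ _ _ G Y HL (or_introl eq_refl) Hth x x' H1 ltac:(lra) H3) as [A1 _].
        assert (0 < c / M1 S * (x' - x)) by (apply Rmult_lt_0_compat; lra). lra.
      + rewrite LM. lra.
    - right. split.
      + apply (map_decr th (- PI) PI); auto; try lra. intros x x' H1 H2 H3.
        destruct (mono _ _ _ _ _ _ _ _ _ _ G Y HL (or_intror eq_refl) Hth x x' H1 ltac:(lra) H3) as [A1 _].
        assert (0 < c / M1 S * (x' - x)) by (apply Rmult_lt_0_compat; lra). lra.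
      + rewrite LM. lra. }
  unfold Sy_bound. fold C1 C2.
  assert (0 <= C1) by (unfold C1; repeat apply Rmult_le_pos; try lra; apply pow_le; lra).
  replace (sg * th PI - sg * th (- PI)) with (2 * PI) by lra.
  apply Rplus_le_compat_r. apply Rmult_le_compat_l; auto.
Qed.

Lemma c_pos y y1 c : periodic y -> yinj y -> Dc y y1 -> (forall t, vnorm (y1 t) = c) -> 0 < c.
Proof.
  intros Py Hinj [Dx Dy] Hc. pose proof PI_RGT_0.
  destruct (vnorm_nonneg (y1 0)) as [P|E]; [rewrite Hc in P; auto|]. exfalso.
  rewrite Hc in E.
  assert (Z : forall t, fst (y1 t) = 0 /\ snd (y1 t) = 0).
  { intros t. pose proof (vnorm_fst (y1 t)); pose proof (vnorm_snd (y1 t)). rewrite Hc, <- E in *.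
    split; apply Rabs_le_inv in H0; apply Rabs_le_inv in H1; lra. }
  assert (Ex : fst (y 0) = fst (y (- PI))).
  { destruct (MVT_cor2 (fun t => fst (y t)) (fun t => fst (y1 t)) (- PI) 0) as [e [He _]]; [lra|auto|].
    rewrite (proj1 (Z e)) in He. lra. }
  assert (Ey : snd (y 0) = snd (y (- PI))).
  { destruct (MVT_cor2 (fun t => snd (y t)) (fun t => snd (y1 t)) (- PI) 0) as [e [He _]]; [lra|auto|].
    rewrite (proj2 (Z e)) in He. lra. }
  assert (y 0 = y (- PI)) by (destruct (y 0), (y (- PI)); simpl in *; subst; auto).
  assert (0 = - PI) by (apply Hinj; auto; lra). lra.
Qed.

Definition Kc : R := 10000000000000000.

Lemma per_curve z z1 z2 S f y : good z z1 z2 S f -> const_speed_param (curve_interior z) y ->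
  exists y1 y2 Sy, Dc y y1 /\ Dc y1 y2 /\
    (forall l, Defs.partition l -> rsum y2 (- PI) l <= Sy) /\
    Sy <= Kc * (sqrt S ^ 7 * f ^ 5 + sqrt S ^ 9 * f ^ 7) /\
    (forall t, on_curve z (y t)) /\
    (forall xi eta, inT xi -> inT eta -> eta <> 0 ->
       y xi <> y (xi - eta) /\ Rabs eta / vdist (y xi) (y (xi - eta)) <= 48 * f * f * sqrt S).
Proof.
  intros G (Py & Hinj & Hbd & y1 & Dy & [c Hc] & _).
  pose proof G as (Pz & _ & _ & HS0 & _ & Hf & _). pose proof PI_RGT_0.
  assert (Hon : forall t, on_curve z (y t)).
  { intros t. apply (boundary_on_curve z z1 z2 S f); auto. apply Hbd. exists t; auto. }
  assert (Hc0 : 0 < c) by (apply (c_pos y y1 c); auto).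
  assert (Y : ycond z y y1 c) by (unfold ycond; tauto).
  destruct (global_lift _ _ _ _ _ _ _ _ G Y) as [th HL].
  destruct (degree _ _ _ _ _ _ _ _ _ G Y Hinj HL) as [sg (Hsg & Hth & Hdeg & Hc1 & Hc2)].
  assert (St : setting z z1 z2 S f y y1 c th sg) by (unfold setting; tauto).
  exists y1, (y2fun c z z1 z2 y), (Sy_bound c f S).
  split; [auto|split; [apply (Dc_y1 _ _ _ _ _ _ _ _ G Y)|split; [apply (riesz_y2 _ _ _ _ _ _ _ _ _ _ St)|]]].
  set (b := sqrt S).
  assert (Hb : b * b = S) by (apply sqrt_sqrt; auto).
  assert (Hb0 : 0 <= b) by apply sqrt_pos.
  set (q := qS S).
  assert (Hq0 : 0 <= q) by apply qS_nonneg.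
  assert (Hq : q * q = 2 * PI * S) by (apply sqrt_sqrt; nra).
  assert (HPI : PI <= 4) by (pose proof PI_4; lra).
  assert (Hq3 : q <= 3 * b) by (apply Rsqr_incr_0_var; unfold Rsqr; nra).
  assert (Hcq : c <= 48 * b) by (unfold q in *; nra).
  split; [|split; auto].
  - unfold Sy_bound. fold q.
    assert (S <= b * b) by lra.
    assert (Hc5 : c ^ 5 <= (48 * b) ^ 5) by (apply pow_incr; lra).
    assert (Hq4 : q ^ 4 <= (3 * b) ^ 4) by (apply pow_incr; lra).
    assert (0 <= c ^ 5) by (apply pow_le; lra).
    assert (0 <= f ^ 5) by (apply pow_le; lra). assert (0 <= f ^ 7) by (apply pow_le; lra).
    assert (T1 : 2 * c ^ 5 * f ^ 5 * (2 * S) <= 4 * (48 * b) ^ 5 * f ^ 5 * (b * b)).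
    { replace (2 * c ^ 5 * f ^ 5 * (2 * S)) with (4 * c ^ 5 * f ^ 5 * S) by ring.
      apply Rmult_le_compat; try nra. }
    assert (T2 : 20000 * c ^ 5 * f ^ 7 * q ^ 4 * (2 * PI) <= 160000 * (48 * b) ^ 5 * f ^ 7 * (3 * b) ^ 4).
    { assert (0 <= q ^ 4) by (apply pow_le; lra).
      assert (0 <= c ^ 5 * f ^ 7 * q ^ 4) by (repeat apply Rmult_le_pos; lra).
      assert (c ^ 5 * f ^ 7 * q ^ 4 <= (48 * b) ^ 5 * f ^ 7 * (3 * b) ^ 4).
      { apply Rmult_le_compat; try nra. }
      nra. }
    unfold Kc. 
    assert (E1 : 4 * (48 * b) ^ 5 * f ^ 5 * (b * b) = 4 * 48^5 * (b ^ 7 * f ^ 5)) by ring.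
    assert (E2 : 160000 * (48 * b) ^ 5 * f ^ 7 * (3 * b) ^ 4 = 160000 * 48^5 * 3^4 * (b ^ 9 * f ^ 7)) by ring.
    assert (0 <= b ^ 7 * f ^ 5) by (apply Rmult_le_pos; apply pow_le; lra).
    assert (0 <= b ^ 9 * f ^ 7) by (apply Rmult_le_pos; apply pow_le; lra).
    lra.
  - intros xi eta Hxi Heta Hne.
    pose proof (Fy_sep _ _ _ _ _ _ _ _ _ _ G Y HL Hsg Hth Hdeg xi eta Hxi Heta) as Sep.
    pose proof (M1_pos _ _ _ _ _ G) as HM.
    assert (Hce : 0 < c / M1 S * Rabs eta) by (apply Rmult_lt_0_compat; [apply Rdiv_lt_0_compat; lra|apply Rabs_pos_lt; auto]).
    assert (Hv : 0 < vdist (y xi) (y (xi - eta))) by (apply (Rmult_lt_reg_l f); lra).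
    split.
    + intros E. rewrite E, vdist_self in Hv. lra.
    + apply (Rmult_le_reg_r (vdist (y xi) (y (xi - eta)))); auto.
      unfold Rdiv. rewrite Rmult_assoc, Rinv_l, Rmult_1_r by lra.
      assert (Rabs eta <= f * M1 S / c * vdist (y xi) (y (xi - eta))).
      { apply (Rmult_le_reg_l (c / M1 S)). apply Rdiv_lt_0_compat; lra.
        replace (c / M1 S * (f * M1 S / c * vdist (y xi) (y (xi - eta)))) with (f * vdist (y xi) (y (xi - eta))) by (field; lra).
        lra. }
      assert (f * M1 S / c <= 48 * f * f * b).
      { unfold M1. fold q. apply (Rmult_le_reg_r c); auto. unfold Rdiv. rewrite Rmult_assoc, Rinv_l, Rmult_1_r by lra.
        assert (f * c >= 1).
        { apply Rle_ge. apply (Rmult_le_compat_l f) in Hc1; [|lra]. rewrite Rinv_r in Hc1 by lra. lra. }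
        assert (H4 : 4 * PI * q <= 48 * b) by nra.
        assert (f * (4 * PI * q) <= f * (48 * b)) by (apply Rmult_le_compat_l; lra).
        assert (0 <= 48 * f * b) by nra.
        assert (48 * f * b * 1 <= 48 * f * b * (f * c)) by (apply Rmult_le_compat_l; lra).
        replace (48 * f * f * b * c) with (48 * f * b * (f * c)) by ring. lra. }
      pose proof (vdist_nonneg (y xi) (y (xi - eta))). nra.
Qed.

Lemma sumN_le n (g g' : nat -> R) : (forall k, (k < n)%nat -> g k <= g' k) -> sumN n g <= sumN n g'.
Proof.
  induction n as [|n IH]; intros H; simpl; [lra|].
  apply Rplus_le_compat. apply IH; intros; apply H; lia. apply H; lia.
Qed.

Lemma sumN_scal n (g : nat -> R) a : sumN n (fun k => a * g k) = a * sumN n g.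
Proof. induction n as [|n IH]; simpl; [ring|]. rewrite IH. ring. Qed.

Lemma sumN_nonneg n (g : nat -> R) : (forall k, (k < n)%nat -> 0 <= g k) -> 0 <= sumN n g.
Proof.
  induction n as [|n IH]; intros H; simpl; [lra|].
  pose proof (H n ltac:(lia)). assert (0 <= sumN n g) by (apply IH; intros; apply H; lia). lra.
Qed.

Lemma term_le_sumN n (g : nat -> R) k : (forall j, (j < n)%nat -> 0 <= g j) -> (k < n)%nat -> g k <= sumN n g.
Proof.
  induction n as [|n IH]; intros H Hk; [lia|]. simpl.
  destruct (Nat.eq_dec k n) as [E|NE].
  - subst. assert (0 <= sumN n g) by (apply sumN_nonneg; intros; apply H; lia). lra.
  - pose proof (H n ltac:(lia)). assert (g k <= sumN n g) by (apply IH; [intros; apply H; lia|lia]). lra.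
Qed.

Lemma glb_exists (E : R -> Prop) : (exists x, E x) -> (exists m, forall x, E x -> m <= x) ->
  exists g, is_glb E g.
Proof.
  intros [x Ex] [m Hm].
  destruct (completeness (fun r => E (- r))) as [l [Hl1 Hl2]].
  - exists (- m). intros r Er. specialize (Hm _ Er). lra.
  - exists (- x). rewrite Ropp_involutive. auto.
  - exists (- l). split.
    + intros y Ey. assert (- y <= l) by (apply Hl1; rewrite Ropp_involutive; auto). lra.
    + intros b Hb. assert (l <= - b).
      { apply Hl2. intros r Er. specialize (Hb _ Er). lra. }
      lra.
Qed.

Lemma lub_exists (E : R -> Prop) : (exists x, E x) -> (exists M, forall x, E x -> x <= M) ->
  exists l, is_lub E l.
Proof.
  intros Hne [M HM]. destruct (completeness E) as [l Hl]; [exists M; exact HM|auto|]. exists l; auto.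
Qed.

Lemma sqrt_le_K x K w8 : 0 <= x -> 1 <= K -> 0 <= w8 -> x <= K * (w8 * w8) -> sqrt x <= K * w8.
Proof.
  intros Hx HK Hw H. apply sqrt_le_of_sq. nra.
  assert (K * (w8 * w8) <= K * w8 * (K * w8)).
  { replace (K * w8 * (K * w8)) with (K * (K * (w8 * w8))) by ring.
    assert (0 <= w8 * w8) by nra. nra. }
  lra.
Qed.

Lemma part_pi : Defs.partition (PI :: nil).
Proof. pose proof PI_RGT_0. split; [discriminate|split; [simpl; split; [lra|auto]|reflexivity]]. Qed.

Lemma good_of (N : nat) Z f k bk : (k < N)%nat -> periodic (Z k) -> L2third (Z k) bk -> FVal N Z f ->
  exists z1 z2 S, good (Z k) z1 z2 S f /\ bk = sqrt S /\ 0 <= S.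
Proof.
  intros Hk Pz (z1 & z2 & D1 & D2 & S & [HS1 HS2] & Eb) [Hinj [HF1 HF2]].
  assert (HS0 : 0 <= S).
  { eapply Rle_trans; [|apply HS1; exists (PI :: nil); split; [apply part_pi|reflexivity]].
    simpl. pose proof PI_RGT_0. rewrite Rplus_0_r. apply Rdiv_le_0_compat. apply vnorm2_nonneg. lra. }
  exists z1, z2, S. split; [|split; auto].
  split; [auto|split; [auto|split; [auto|split; [auto|split; [|split]]]]].
  - intros l Hl. apply HS1. exists l; auto.
  - apply HF1. left; auto.
  - intros xi eta Hxi Heta Hne. split. apply Hinj; auto.
    apply HF1. right. exists k, xi, eta. tauto.
Qed.

Lemma Y_curve (N : nat) Z f k ak bk y : (k < N)%nat -> periodic (Z k) -> Linf (Z k) ak -> L2third (Z k) bk ->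
  FVal N Z f -> const_speed_param (curve_interior (Z k)) y ->
  exists aY bY, Linf y aY /\ L2third y bY /\ 0 <= aY <= ak /\ 0 <= bY /\
    bY * bY <= Kc * (bk ^ 7 * f ^ 5 + bk ^ 9 * f ^ 7) /\
    (forall t, on_curve (Z k) (y t)) /\
    (forall xi eta, inT xi -> inT eta -> eta <> 0 ->
       y xi <> y (xi - eta) /\ Rabs eta / vdist (y xi) (y (xi - eta)) <= 48 * f * f * bk).
Proof.
  intros Hk Pz HLa HLb HF Hy.
  destruct (good_of N Z f k bk Hk Pz HLb HF) as (z1 & z2 & S & G & Eb & HS0).
  destruct (per_curve _ _ _ _ _ y G Hy) as (y1 & y2 & Sy & Dy1 & Dy2 & HR & HSy & Hon & HFy).
  pose proof PI_RGT_0.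
  destruct (lub_exists (fun r => exists l, Defs.partition l /\ r = rsum y2 (- PI) l)) as [SY [HY1 HY2]].
  { exists (rsum y2 (- PI) (PI :: nil)). exists (PI :: nil). split; auto. apply part_pi. }
  { exists Sy. intros x [l [Hl E]]. subst. auto. }
  assert (HSY0 : 0 <= SY).
  { eapply Rle_trans; [|apply HY1; exists (PI :: nil); split; [apply part_pi|reflexivity]].
    simpl. rewrite Rplus_0_r. apply Rdiv_le_0_compat. apply vnorm2_nonneg. lra. }
  assert (HSYb : SY <= Sy) by (apply HY2; intros x [l [Hl E]]; subst; auto).
  destruct HLa as [Ha1 Ha2].
  destruct (lub_exists (fun r => exists t, inT t /\ r = vnorm (y t))) as [aY [HA1 HA2]].
  { exists (vnorm (y 0)). exists 0. split; auto. unfold inT; lra. }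
  { exists ak. intros x [t [Ht E]]. subst. destruct (Hon t) as [t0 E0].
    destruct (periodic_reduce (Z k) Pz t0) as [t1 [Ht1 E1]]. rewrite <- E0, E1.
    apply Ha1. exists t1. split; auto. unfold inT; lra. }
  exists aY, (sqrt SY). split; [split; auto|split; [|split; [|split; [|split; [|split]]]]].
  - exists y1, y2. split; auto. split; auto. exists SY. split; auto. split; auto.
  - split.
    + eapply Rle_trans; [apply vnorm_nonneg|]. apply HA1. exists 0. split; auto. unfold inT; lra.
    + apply HA2. intros x [t [Ht E]]. subst. destruct (Hon t) as [t0 E0].
      destruct (periodic_reduce (Z k) Pz t0) as [t1 [Ht1 E1]]. rewrite <- E0, E1.
      apply Ha1. exists t1. split; auto. unfold inT; lra.
  - apply sqrt_pos.
  - rewrite sqrt_sqrt by auto. rewrite Eb. lra.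
  - auto.
  - rewrite Eb. auto.
Qed.

Definition Pk (N : nat) (Z Y : nat -> curve) (f : R) (a b : nat -> R) (k : nat) (p : R * R) : Prop :=
  (k < N)%nat ->
  Linf (Y k) (fst p) /\ L2third (Y k) (snd p) /\ 0 <= fst p <= a k /\ 0 <= snd p /\
  snd p * snd p <= Kc * (b k ^ 7 * f ^ 5 + b k ^ 9 * f ^ 7) /\
  (forall t, on_curve (Z k) (Y k t)) /\
  (forall xi eta, inT xi -> inT eta -> eta <> 0 ->
     Y k xi <> Y k (xi - eta) /\ Rabs eta / vdist (Y k xi) (Y k (xi - eta)) <= 48 * f * f * b k).

Lemma pow_split x n m : x ^ (n + m) = x ^ n * x ^ m.
Proof. apply pow_add. Qed.

Theorem lemma4p2 :
  exists C : R, 1 <= C /\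
    forall (N : nat) (Z : nat -> curve) (w : R),
      (1 <= N)%nat ->
      triple_norm N Z w ->
      forall Y : nat -> curve,
        (forall k, (k < N)%nat -> const_speed_param (curve_interior (Z k)) (Y k)) ->
        exists v, triple_norm N Y v /\ v <= C * w ^ 8.
Proof.
  exists (2 * Kc + 100). split; [unfold Kc; lra|].
  intros N Z w HN (h & d & f & HH & Hd & Hd0 & HF & Ew) Y HY.
  destruct HH as (Pz & a & b & Hab & Eh).
  pose proof HF as (HFinj & HF1 & HF2).
  assert (Hf : 1 <= f) by (apply HF1; left; auto).
  pose proof PI_RGT_0.
  assert (Hex : forall k, exists p, Pk N Z Y f a b k p).
  { intros k. destruct (lt_dec k N) as [Hk|Hk].
    - destruct (Hab k Hk) as [Ha Hb].
      destruct (Y_curve N Z f k (a k) (b k) (Y k) Hk (Pz k Hk) Ha Hb HF (HY k Hk)) as (aY & bY & HP).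
      exists (aY, bY). intros _. simpl. exact HP.
    - exists (0, 0). intros Hk'. contradiction. }
  set (ab := fun k => epsilon (inhabits (0, 0)) (Pk N Z Y f a b k)).
  assert (Hab' : forall k, Pk N Z Y f a b k (ab k)).
  { intros k. unfold ab. apply epsilon_spec. apply Hex. }
  set (aY := fun k => fst (ab k)). set (bY := fun k => snd (ab k)).
  assert (Hb0 : forall k, (k < N)%nat -> 0 <= b k).
  { intros k Hk. destruct (Hab k Hk) as [_ (z1 & z2 & _ & _ & S & _ & E)]. rewrite E. apply sqrt_pos. }
  assert (Ha0 : forall k, (k < N)%nat -> 0 <= a k).
  { intros k Hk. destruct (Hab k Hk) as [[Ha _] _]. eapply Rle_trans; [apply (vnorm_nonneg (Z k 0))|].
    apply Ha. exists 0. split; auto. unfold inT; lra. }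
  assert (Hsum0 : 0 <= sumN N (fun k => a k * a k + b k * b k)).
  { apply sumN_nonneg. intros k Hk. nra. }
  assert (Hh0 : 0 <= h) by (rewrite Eh; apply sqrt_pos).
  assert (Hh2 : h * h = sumN N (fun k => a k * a k + b k * b k)) by (rewrite Eh; apply sqrt_sqrt; auto).
  assert (Hbh : forall k, (k < N)%nat -> b k <= h).
  { intros k Hk. apply Rsqr_incr_0_var; [|auto]. unfold Rsqr. rewrite Hh2.
    pose proof (term_le_sumN N (fun k => a k * a k + b k * b k) k ltac:(intros; nra) Hk). simpl in H0.
    pose proof (Ha0 k Hk). nra. }
  assert (Hid : 0 < / d) by (apply Rinv_0_lt_compat; auto).
  assert (Hw1 : 1 <= w) by lra.
  assert (Hwh : h <= w) by lra. assert (Hwf : f <= w) by lra. assert (Hwd : / d <= w) by lra.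
  assert (Hw8 : forall n, (n <= 8)%nat -> w ^ n <= w ^ 8) by (intros; apply Rle_pow; auto).
  assert (Hw8' : 1 <= w ^ 8) by (rewrite <- (pow1 8); apply pow_incr; lra).
  set (hY := sqrt (sumN N (fun k => aY k * aY k + bY k * bY k))).
  set (A := 1 + Kc * (h ^ 5 * f ^ 5 + h ^ 7 * f ^ 7)).
  assert (HA : sumN N (fun k => aY k * aY k + bY k * bY k) <= A * (h * h)).
  { rewrite Hh2, <- sumN_scal. apply sumN_le. intros k Hk.
    destruct (Hab' k Hk) as (_ & _ & [Ha1 Ha2] & Hb1 & Hb2 & _). fold (aY k) (bY k) in *.
    pose proof (Hb0 k Hk). pose proof (Hbh k Hk).
    assert (E7 : b k ^ 7 <= h ^ 5 * (b k * b k)).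
    { replace (b k ^ 7) with (b k ^ 5 * (b k * b k)) by ring.
      apply Rmult_le_compat_r; [nra|]. apply pow_incr; lra. }
    assert (E9 : b k ^ 9 <= h ^ 7 * (b k * b k)).
    { replace (b k ^ 9) with (b k ^ 7 * (b k * b k)) by ring.
      apply Rmult_le_compat_r; [nra|]. apply pow_incr; lra. }
    assert (0 <= f ^ 5) by (apply pow_le; lra). assert (0 <= f ^ 7) by (apply pow_le; lra).
    assert (0 <= h ^ 5) by (apply pow_le; lra). assert (0 <= h ^ 7) by (apply pow_le; lra).
    assert (HK : 0 <= Kc) by (unfold Kc; lra).
    assert (Kc * (b k ^ 7 * f ^ 5 + b k ^ 9 * f ^ 7) <= Kc * (h ^ 5 * f ^ 5 + h ^ 7 * f ^ 7) * (b k * b k)).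
    { rewrite Rmult_assoc. apply Rmult_le_compat_l; auto.
      assert (b k ^ 7 * f ^ 5 <= h ^ 5 * (b k * b k) * f ^ 5) by (apply Rmult_le_compat_r; auto).
      assert (b k ^ 9 * f ^ 7 <= h ^ 7 * (b k * b k) * f ^ 7) by (apply Rmult_le_compat_r; auto).
      nra. }
    assert (aY k * aY k <= a k * a k) by nra.
    assert (0 <= Kc * (h ^ 5 * f ^ 5 + h ^ 7 * f ^ 7)) by (apply Rmult_le_pos; nra).
    unfold A. nra. }
  assert (HA2 : A * (h * h) <= (1 + 2 * Kc) * (w ^ 8 * w ^ 8)).
  { assert (h ^ 5 * f ^ 5 <= w ^ 14).
    { replace (w ^ 14) with (w ^ 5 * w ^ 5 * w ^ 4) by ring.
      assert (h ^ 5 <= w ^ 5) by (apply pow_incr; lra). assert (f ^ 5 <= w ^ 5) by (apply pow_incr; lra).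
      assert (1 <= w ^ 4) by (rewrite <- (pow1 4); apply pow_incr; lra).
      assert (0 <= h ^ 5) by (apply pow_le; lra). assert (0 <= f ^ 5) by (apply pow_le; lra).
      assert (h ^ 5 * f ^ 5 <= w ^ 5 * w ^ 5) by (apply Rmult_le_compat; auto).
      assert (0 <= w ^ 5 * w ^ 5) by nra. nra. }
    assert (h ^ 7 * f ^ 7 <= w ^ 14).
    { replace (w ^ 14) with (w ^ 7 * w ^ 7) by ring.
      assert (h ^ 7 <= w ^ 7) by (apply pow_incr; lra). assert (f ^ 7 <= w ^ 7) by (apply pow_incr; lra).
      assert (0 <= h ^ 7) by (apply pow_le; lra). assert (0 <= f ^ 7) by (apply pow_le; lra).
      apply Rmult_le_compat; auto. }
    assert (1 <= w ^ 14) by (rewrite <- (pow1 14); apply pow_incr; lra).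
    assert (HAw : A <= (1 + 2 * Kc) * w ^ 14) by (unfold A, Kc in *; nra).
    assert (h * h <= w * w) by nra.
    replace (w ^ 8 * w ^ 8) with (w ^ 14 * (w * w)) by ring.
    assert (0 <= A) by (unfold A, Kc; assert (0 <= h ^ 5 * f ^ 5 + h ^ 7 * f ^ 7) by
      (apply Rplus_le_le_0_compat; apply Rmult_le_pos; apply pow_le; lra); nra).
    assert (0 <= w ^ 14) by lra.
    apply Rle_trans with (A * (w * w)). apply Rmult_le_compat_l; auto.
    replace ((1 + 2 * Kc) * (w ^ 14 * (w * w))) with (((1 + 2 * Kc) * w ^ 14) * (w * w)) by ring.
    apply Rmult_le_compat_r; nra. }
  assert (HhY : hY <= (1 + 2 * Kc) * w ^ 8).
  { unfold hY. apply sqrt_le_K. apply sumN_nonneg. intros. nra. unfold Kc; lra. lra. lra. }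
  assert (HdY : exists dY, deltaVal N Y dY /\ 0 < dY /\ / dY <= w).
  { destruct (le_lt_dec N 1) as [N1|N2].
    - exists 1. split; [left; auto|]. rewrite Rinv_1. lra.
    - destruct Hd as [[N1 _]|[_ [mZ [[HmZ1 HmZ2] Ed]]]]; [lia|].
      destruct (glb_exists (fun r => exists i k xi eta, (i < N)%nat /\ (k < N)%nat /\ i <> k /\
                  inT xi /\ inT eta /\ r = vdist (Y i xi) (Y k eta))) as [mY [HmY1 HmY2]].
      { exists (vdist (Y 0%nat 0) (Y 1%nat 0)). exists 0%nat, 1%nat, 0, 0.
        repeat split; try lia; unfold inT; lra. }
      { exists 0. intros x (i & k & xi & eta & _ & _ & _ & _ & _ & E). subst x. apply vdist_nonneg. }
      assert (Hm : mZ <= mY).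
      { apply HmY2. intros r (i & k & xi & eta & Hi & Hk & Hik & Hxi & Heta & E). subst r.
        destruct (Hab' i Hi) as (_ & _ & _ & _ & _ & Honi & _).
        destruct (Hab' k Hk) as (_ & _ & _ & _ & _ & Honk & _).
        destruct (Honi xi) as [t0 E0]. destruct (periodic_reduce (Z i) (Pz i Hi) t0) as [t1 [Ht1 E1]].
        destruct (Honk eta) as [s0 F0]. destruct (periodic_reduce (Z k) (Pz k Hk) s0) as [s1 [Hs1 F1]].
        fold (aY i) in *. apply HmZ1. exists i, k, t1, s1. split; auto. split; auto. split; auto.
        split; [unfold inT; lra|split; [unfold inT; lra|]].
        rewrite <- E0, <- F0, E1, F1. auto. }
      exists (Rmin mY 1). split; [right; split; [lia|exists mY; split; [split; auto|auto]]|].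
      assert (d <= Rmin mY 1) by (rewrite Ed; apply Rle_min_compat_r; auto).
      split; [lra|]. eapply Rle_trans; [|apply Hwd]. apply Rinv_le_contravar; lra. }
  destruct HdY as (dY & HdY1 & HdY2 & HdY3).
  assert (HfY : exists fY, FVal N Y fY /\ fY <= 1 + 48 * f * f * h).
  { destruct (lub_exists (fun r => r = 1 \/ exists k xi eta, (k < N)%nat /\ inT xi /\ inT eta /\ eta <> 0 /\
                 r = Rabs eta / vdist (Y k xi) (Y k (xi - eta)))) as [fY [HfY1 HfY2]].
    { exists 1. left; auto. }
    { exists (1 + 48 * f * f * h). intros x [E|(k & xi & eta & Hk & Hxi & Heta & Hne & E)].
      - subst x. assert (0 <= 48 * f * f * h) by (repeat apply Rmult_le_pos; lra). lra.
      - subst x. destruct (Hab' k Hk) as (_ & _ & _ & _ & _ & _ & HFk).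
        destruct (HFk xi eta Hxi Heta Hne) as [_ Hq].
        assert (48 * f * f * b k <= 48 * f * f * h).
        { apply Rmult_le_compat_l; [nra|]. apply Hbh; auto. }
        lra. }
    exists fY. split; [split; [|split; auto]|].
    - intros k xi eta Hk Hxi Heta Hne. destruct (Hab' k Hk) as (_ & _ & _ & _ & _ & _ & HFk).
      apply HFk; auto.
    - apply HfY2. intros x [E|(k & xi & eta & Hk & Hxi & Heta & Hne & E)].
      + subst x. assert (0 <= 48 * f * f * h) by (repeat apply Rmult_le_pos; lra). lra.
      + subst x. destruct (Hab' k Hk) as (_ & _ & _ & _ & _ & _ & HFk).
        destruct (HFk xi eta Hxi Heta Hne) as [_ Hq].
        assert (48 * f * f * b k <= 48 * f * f * h).
        { apply Rmult_le_compat_l; [nra|]. apply Hbh; auto. }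
        lra. }
  destruct HfY as (fY & HfY1 & HfY2).
  exists (hY + / dY + fY). split.
  - exists hY, dY, fY. split; [|split; [auto|split; [auto|split; [auto|reflexivity]]]].
    split.
    + intros k Hk. destruct (HY k Hk) as [Py _]. auto.
    + exists aY, bY. split; [|reflexivity].
      intros k Hk. destruct (Hab' k Hk) as (H1 & H2 & _). split; auto.
  - assert (f * f * h <= w ^ 8).
    { eapply Rle_trans; [|apply (Hw8 3%nat ltac:(lia))]. simpl.
      assert (f * f <= w * w) by (apply Rmult_le_compat; lra).
      replace (w * (w * (w * 1))) with ((w * w) * w) by ring.
      apply Rmult_le_compat; nra. }
    assert (w <= w ^ 8) by (eapply Rle_trans; [|apply (Hw8 1%nat ltac:(lia))]; simpl; lra).
    assert (HK : 0 <= Kc) by (unfold Kc; lra).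
    nra.
Qed.
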